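(* Let $f(z)=\sum_{k\ge0}a_kz^k$ be an entire transcendental function, let $a_{n_0}$ be its first nonzero coefficient, let $M(r)=\max_{\theta}|f(re^{i\theta})|$, and for $n>n_0$ let $r_\diamond(n)=\operatorname{argmin}_{r>0}r^{-n}M(r)$ (the unique minimizer). Then $r_\diamond(n)\le r_\diamond(n+1)$ for $n>n_0$, and $\lim_{n\to\infty}r_\diamond(n)=\infty$. *)

(* Defs.v *)
From Stdlib Require Import Reals.
From Coquelicot Require Import Coquelicot.
Open Scope R_scope.

(* The power series f(z) = sum_k a_k z^k (value of the series), computed
   componentwise (real and imaginary parts), since Coquelicot's [Series]
   is real-valued; this is the complex sum whenever the series converges. *)
Definition pser (a : nat -> C) (z : C) : C :=
  (Series (fun k => fst (Cmult (a k) (Cpow z k))),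
   Series (fun k => snd (Cmult (a k) (Cpow z k)))).

Definition entire_coeffs (a : nat -> C) : Prop :=
  forall z : C, @ex_series C_AbsRing C_NormedModule (fun k => Cmult (a k) (Cpow z k)).

Definition transcendental_coeffs (a : nat -> C) : Prop :=
  forall N : nat, exists k : nat, (N <= k)%nat /\ a k <> 0%C.

Definition first_nonzero (a : nat -> C) (n0 : nat) : Prop :=
  a n0 <> 0%C /\ forall k : nat, (k < n0)%nat -> a k = 0%C.

(* M(r) = max_theta |f(r e^{i theta})|  (taken as the supremum, which is attained). *)
Definition maxmod (a : nat -> C) (r : R) : R :=
  real (Lub_Rbar (fun y : R => exists theta : R,
          y = Cmod (pser a (r * cos theta, r * sin theta)))).

Definition is_rdiamond (a : nat -> C) (n : nat) (r : R) : Prop :=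
  0 < r /\ forall s : R, 0 < s -> maxmod a r / r ^ n <= maxmod a s / s ^ n.

(* Main.v *)
Require Import Defs.
From Stdlib Require Import Reals Lra Lia Classical Arith.
From Coquelicot Require Import Coquelicot.
Open Scope R_scope.


Definition Bnd (e : nat -> C) (rho B : R) : Prop :=
  forall k, Cmod (e k) * rho ^ k <= B.
Definition ACB (e : nat -> C) : Prop :=
  forall rho, 0 <= rho -> exists B, Bnd e rho B.

Lemma bounded_of_eventually (f : nat -> R) (N : nat) :
  (forall k, (N <= k)%nat -> f k <= 1) -> exists B, forall k, f k <= B.
Proof.
  revert f; induction N as [|N IH]; intros f H.
  - exists 1. intros k; apply H; lia.
  - destruct (IH (fun k => if Nat.eq_dec k N then 1 else f k)) as [B HB].
    { intros k Hk. destruct (Nat.eq_dec k N); [lra|]. apply H; lia. }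
    exists (Rmax B (f N)). intros k. destruct (Nat.eq_dec k N).
    + subst. apply Rmax_r.
    + specialize (HB k). destruct (Nat.eq_dec k N); [congruence|].
      eapply Rle_trans; [apply HB| apply Rmax_l].
Qed.

Lemma Cmod_real_pow (rho : R) k : 0 <= rho -> Cmod (Cpow (RtoC rho) k) = rho ^ k.
Proof.
  intros H. rewrite Cmod_pow, Cmod_R. rewrite Rabs_pos_eq; auto.
Qed.

Lemma entire_ACB (a : nat -> C) : entire_coeffs a -> ACB a.
Proof.
  intros Ha rho Hrho.
  destruct (Ha (RtoC rho)) as [l Hl].
  unfold is_series in Hl.
  destruct (proj1 (filterlim_locally _ _) Hl (mkposreal 1 Rlt_0_1)) as [N HN].
  destruct (bounded_of_eventually (fun k => Cmod (a k) * rho ^ k / (2 * sqrt 2 + 1)) (S N)) as [B HB].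
  { intros k Hk. destruct k as [|k]; [lia|].
    assert (Hk1 : (N <= k)%nat) by lia. assert (H1 := HN k Hk1). assert (H2 := HN (S k) ltac:(lia)).
    apply ball_sym in H1. assert (H3 := ball_triangle _ _ _ _ _ H1 H2).
    assert (H4 := C_NormedModule_mixin_compat2 _ _ (mkposreal (1+1) ltac:(lra)) H3).
    simpl in H4. rewrite sum_Sn in H4.
    assert (E : forall x y : C, minus (plus x y) x = y)
      by (intros; unfold minus, plus, opp; simpl; ring).
    rewrite E in H4.
    rewrite Cmod_mult, Cmod_real_pow in H4 by auto.
    assert (0 < 2 * sqrt 2 + 1) by (generalize (sqrt_pos 2); lra).
    apply Rmult_le_reg_r with (2 * sqrt 2 + 1); auto.
    unfold Rdiv; rewrite Rmult_assoc, Rinv_l by lra. lra. }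
  exists (B * (2 * sqrt 2 + 1)). intros k. specialize (HB k).
  assert (0 < 2 * sqrt 2 + 1) by (generalize (sqrt_pos 2); lra).
  assert (HB' := Rmult_le_compat_r (2*sqrt 2+1) _ _ ltac:(lra) HB).
  unfold Rdiv in HB'. rewrite Rmult_assoc, Rinv_l in HB' by lra. lra.
Qed.


Lemma geom_ex (B x : R) : 0 <= x <= 1/2 -> ex_series (fun k => B * x ^ k).
Proof.
  intros Hx. exists (B * / (1 - x)).
  apply (is_series_scal_l (V := R_NormedModule) B (fun k => x ^ k)).
  apply is_series_geom. rewrite Rabs_pos_eq; lra.
Qed.

Lemma geom_series (x : R) : 0 <= x <= 1/2 -> Series (fun k => x ^ k) = / (1 - x).
Proof. intros Hx. apply Series_geom. rewrite Rabs_pos_eq; lra. Qed.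

Lemma real_tail (b : nat -> R) (B x : R) N : 0 <= x <= 1/2 ->
  (forall k, Rabs (b k) <= B * x ^ k) ->
  ex_series b /\ Rabs (Series b - sum_n b N) <= 2 * B * x ^ (S N).
Proof.
  intros Hx Hb.
  assert (HB : 0 <= B) by (specialize (Hb O); simpl in Hb;
    generalize (Rabs_pos (b O)); lra).
  assert (Hex : ex_series b).
  { apply ex_series_Rabs. apply (ex_series_le (V := R_CompleteNormedModule)) with (fun k => B * x ^ k).
    - intros n. change (norm (Rabs (b n))) with (Rabs (Rabs (b n))). rewrite Rabs_Rabsolu. apply Hb.
    - apply geom_ex; auto. }
  split; auto.
  rewrite (Series_incr_n b (S N)) by (auto; lia). simpl pred.
  rewrite sum_n_Reals.
  replace (sum_f_R0 b N + Series (fun k : nat => b (S N + k)%nat) - sum_f_R0 b N)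
    with (Series (fun k : nat => b (S N + k)%nat)) by ring.
  assert (Hex2 : ex_series (fun k => B * x ^ (S N) * x ^ k)) by apply geom_ex, Hx.
  assert (Hexa : ex_series (fun k : nat => Rabs (b (S N + k)%nat))).
  { apply (ex_series_le (V := R_CompleteNormedModule)) with (fun k => B * x ^ (S N) * x ^ k); auto.
    intros n. change (norm (Rabs (b (S N + n)%nat))) with (Rabs (Rabs (b (S N + n)%nat))).
    rewrite Rabs_Rabsolu, Rmult_assoc, <- pow_add. apply Hb. }
  eapply Rle_trans; [apply Series_Rabs; auto|].
  eapply Rle_trans; [apply Series_le with (b := fun k => B * x ^ (S N) * x ^ k)|].
  - intros n. split; [apply Rabs_pos|]. rewrite Rmult_assoc, <- pow_add. apply Hb.
  - auto.
  - rewrite Series_scal_l, geom_series by auto.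
    assert (0 <= B * x ^ S N) by (apply Rmult_le_pos; auto; apply pow_le; lra).
    assert (/ (1 - x) <= 2).
    { rewrite <- (Rinv_inv 2). apply Rinv_le_contravar; lra. }
    nra.
Qed.

Fixpoint csum (f : nat -> C) (N : nat) : C :=
  match N with O => f O | S n => Cplus (csum f n) (f (S n)) end.

Lemma csum_fst f N : fst (csum f N) = sum_n (fun k => fst (f k)) N.
Proof. induction N; simpl. now rewrite sum_O. rewrite sum_Sn, IHN. reflexivity. Qed.
Lemma csum_snd f N : snd (csum f N) = sum_n (fun k => snd (f k)) N.
Proof. induction N; simpl. now rewrite sum_O. rewrite sum_Sn, IHN. reflexivity. Qed.

Lemma Cmod_le_sum (c : C) : Cmod c <= Rabs (fst c) + Rabs (snd c).
Proof.
  unfold Cmod. rewrite <- (sqrt_pow2 (Rabs (fst c) + Rabs (snd c)))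
    by (generalize (Rabs_pos (fst c)) (Rabs_pos (snd c)); lra).
  apply sqrt_le_1_alt.
  rewrite <- (pow2_abs (fst c)), <- (pow2_abs (snd c)).
  generalize (Rabs_pos (fst c)) (Rabs_pos (snd c)); intros; nra.
Qed.

Lemma Rabs_fst_le (c : C) : Rabs (fst c) <= Cmod c.
Proof. apply re_le_Cmod. Qed.
Lemma Rabs_snd_le (c : C) : Rabs (snd c) <= Cmod c.
Proof. eapply Rle_trans; [apply Rmax_r|apply Rmax_Cmod]. Qed.

Definition uu (e : nat -> C) (z : C) (k : nat) : C := Cmult (e k) (Cpow z k).

Lemma tail_gen (f : nat -> C) (B x : R) N : 0 <= x <= 1/2 ->
  (forall k, Cmod (f k) <= B * x ^ k) ->
  Cmod (Cminus (Series (fun k => fst (f k)), Series (fun k => snd (f k))) (csum f N))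
    <= 4 * B * x ^ (S N).
Proof.
  intros Hx Hf.
  destruct (real_tail (fun k => fst (f k)) B x N Hx) as [_ H1].
  { intros k. eapply Rle_trans; [apply Rabs_fst_le| apply Hf]. }
  destruct (real_tail (fun k => snd (f k)) B x N Hx) as [_ H2].
  { intros k. eapply Rle_trans; [apply Rabs_snd_le| apply Hf]. }
  eapply Rle_trans; [apply Cmod_le_sum|]. simpl.
  rewrite csum_fst, csum_snd. simpl in H1, H2. unfold Rminus in *. lra.
Qed.

Lemma tail_bound e z sigma B N : 0 < sigma -> Cmod z <= sigma -> Bnd e (2*sigma) B ->
  Cmod (Cminus (pser e z) (csum (uu e z) N)) <= 4 * B * (Cmod z / (2*sigma)) ^ (S N).
Proof.
  intros Hs Hz HB. unfold pser.
  apply (tail_gen (uu e z)).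
  - split. apply Rmult_le_pos. apply Cmod_ge_0. apply Rlt_le, Rinv_0_lt_compat; lra.
    apply Rmult_le_reg_r with (2*sigma); [lra|]. unfold Rdiv. rewrite Rmult_assoc, Rinv_l; lra.
  - intros k. unfold uu. rewrite Cmod_mult, Cmod_pow.
    specialize (HB k).
    replace (Cmod z ^ k) with ((2*sigma)^k * (Cmod z / (2 * sigma)) ^ k).
    + assert (0 <= (Cmod z / (2 * sigma)) ^ k).
      { apply pow_le. apply Rmult_le_pos. apply Cmod_ge_0. apply Rlt_le, Rinv_0_lt_compat; lra. }
      rewrite <- Rmult_assoc. apply Rmult_le_compat_r; auto.
    + rewrite <- Rpow_mult_distr. f_equal. field. lra.
Qed.


Lemma half_pow_pos N : 0 < (1/2)^N.
Proof. apply pow_lt; lra. Qed.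

Lemma half_pow_le1 N : (1/2)^N <= 1.
Proof. induction N; simpl; lra. Qed.

Lemma half_pow_mono N M : (N <= M)%nat -> (1/2)^M <= (1/2)^N.
Proof.
  intros H. replace M with (N + (M - N))%nat by lia. rewrite pow_add.
  assert (0 < (1/2)^N) by apply half_pow_pos.
  assert ((1/2)^(M-N) <= 1) by apply half_pow_le1. nra.
Qed.

Lemma lim_le_ev X Y C N0 : (forall N, (N0 <= N)%nat -> X <= Y + C * (1/2)^N) -> X <= Y.
Proof.
  intros H. destruct (Rle_dec X Y) as [|Hn]; auto. exfalso.
  assert (Hd : 0 < X - Y) by lra.
  destruct (Rle_dec C 0) as [HC|HC].
  - specialize (H N0 (le_n _)). assert (0 < (1/2)^N0) by apply half_pow_pos. nra.
  - destruct (pow_lt_1_zero (1/2) ltac:(rewrite Rabs_pos_eq; lra) ((X - Y)/C))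
      as [N HN].
    { apply Rdiv_lt_0_compat; lra. }
    specialize (HN (max N N0) ltac:(lia)). specialize (H (max N N0) ltac:(lia)).
    rewrite Rabs_pos_eq in HN by (apply Rlt_le, half_pow_pos).
    apply Rmult_lt_compat_l with (r := C) in HN; [|lra].
    replace (C * ((X - Y) / C)) with (X - Y) in HN by (field; lra). lra.
Qed.

Lemma pow_half_le x N : 0 <= x <= 1/2 -> x ^ (S N) <= (1/2)^N.
Proof.
  intros Hx. eapply Rle_trans. apply pow_incr. exact Hx. apply half_pow_mono. lia.
Qed.

Lemma x_in (z : C) : 0 <= Cmod z / (2 * (Cmod z + 1)) <= 1/2.
Proof.
  assert (H := Cmod_ge_0 z). split.
  - apply Rmult_le_pos; auto. apply Rlt_le, Rinv_0_lt_compat; lra.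
  - apply Rmult_le_reg_r with (2 * (Cmod z + 1)); [lra|].
    unfold Rdiv. rewrite Rmult_assoc, Rinv_l by lra. lra.
Qed.

Lemma pser_approx e z : ACB e -> exists C, 0 <= C /\
  forall N, Cmod (Cminus (pser e z) (csum (uu e z) N)) <= C * (1/2)^N.
Proof.
  intros He. assert (H0 := Cmod_ge_0 z).
  destruct (He (2 * (Cmod z + 1))) as [B HB]; [lra|].
  assert (HB0 : 0 <= B) by (specialize (HB O); simpl in HB;
     generalize (Cmod_ge_0 (e O)); lra).
  exists (4 * B). split; [lra|]. intros N.
  eapply Rle_trans. apply (tail_bound e z (Cmod z + 1) B N); auto; lra.
  apply Rmult_le_compat_l; [lra|]. apply pow_half_le, x_in.
Qed.

Lemma pser_unique e z V C N0 : ACB e ->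
  (forall N, (N0 <= N)%nat -> Cmod (Cminus V (csum (uu e z) N)) <= C * (1/2)^N) ->
  V = pser e z.
Proof.
  intros He H. destruct (pser_approx e z He) as [C' [HC' HA]].
  cut (Cminus V (pser e z) = RtoC 0).
  { intros Hm. replace V with (Cplus (Cminus V (pser e z)) (pser e z)) by ring.
    rewrite Hm. ring. }
  apply Cmod_eq_0. apply Rle_antisym; [|apply Cmod_ge_0].
  apply (lim_le_ev _ 0 (C + C') N0). intros N HN.
  replace (Cminus V (pser e z)) with
    (Cplus (Cminus V (csum (uu e z) N)) (Copp (Cminus (pser e z) (csum (uu e z) N)))) by ring.
  eapply Rle_trans; [apply Cmod_triangle|]. rewrite Cmod_opp.
  specialize (H N HN). specialize (HA N). lra.
Qed.

Lemma pser_bound e : ACB e -> forall rho, 0 <= rho -> exists K, forall z,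
  Cmod z <= rho -> Cmod (pser e z) <= K.
Proof.
  intros He rho Hr. destruct (He (2 * (rho + 1))) as [B HB]; [lra|].
  assert (HB0 : 0 <= B) by (specialize (HB O); simpl in HB;
     generalize (Cmod_ge_0 (e O)); lra).
  exists (B + 4 * B). intros z Hz.
  assert (Ht := tail_bound e z (rho + 1) B O ltac:(lra) ltac:(lra) HB).
  assert (Hx : 0 <= Cmod z / (2 * (rho + 1)) <= 1/2).
  { assert (H := Cmod_ge_0 z). split.
    - apply Rmult_le_pos; auto. apply Rlt_le, Rinv_0_lt_compat; lra.
    - apply Rmult_le_reg_r with (2 * (rho + 1)); [lra|].
      unfold Rdiv. rewrite Rmult_assoc, Rinv_l by lra. lra. }
  assert (Hp := pow_half_le _ O Hx). simpl pow in Hp.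
  replace (pser e z) with (Cplus (Cminus (pser e z) (csum (uu e z) 0)) (csum (uu e z) 0)) by ring.
  eapply Rle_trans; [apply Cmod_triangle|].
  simpl csum. unfold uu. rewrite Cmod_mult. simpl Cpow. rewrite Cmod_1.
  specialize (HB O). simpl in HB.
  assert (4 * B * (Cmod z / (2 * (rho + 1))) ^ 1 <= 4 * B) by
    (apply Rle_trans with (4 * B * (1/2)^0); [apply Rmult_le_compat_l; [lra| exact Hp]|simpl; lra]).
  simpl csum in Ht; unfold uu in Ht; simpl Cpow in Ht. lra.
Qed.

Lemma INR_le_2pow k : INR k <= 2 ^ k.
Proof.
  induction k. simpl; lra. rewrite S_INR. simpl.
  assert (1 <= 2 ^ k) by (apply pow_R1_Rle; lra). lra.
Qed.

Lemma Cpow_diff (z w : C) rho k : 1 <= rho -> Cmod z <= rho -> Cmod w <= rho ->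
  Cmod (Cminus (Cpow z k) (Cpow w k)) <= INR k * rho ^ k * Cmod (Cminus z w).
Proof.
  intros H1 Hz Hw. induction k.
  - simpl. replace (Cminus 1 1) with (RtoC 0) by ring. rewrite Cmod_0. lra.
  - replace (Cminus (Cpow z (S k)) (Cpow w (S k))) with
      (Cplus (Cmult z (Cminus (Cpow z k) (Cpow w k))) (Cmult (Cpow w k) (Cminus z w)))
      by (simpl; ring).
    eapply Rle_trans; [apply Cmod_triangle|]. rewrite !Cmod_mult, Cmod_pow.
    assert (Hd := Cmod_ge_0 (Cminus z w)).
    assert (Hpk : Cmod w ^ k <= rho ^ k) by (apply pow_incr; split; auto; apply Cmod_ge_0).
    assert (Hrk : rho ^ k <= rho ^ S k) by (simpl; assert (0 <= rho^k) by (apply pow_le; lra); nra).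
    assert (0 <= Cmod (Cminus (Cpow z k) (Cpow w k))) by apply Cmod_ge_0.
    assert (Cmod z * Cmod (Cminus (Cpow z k) (Cpow w k)) <= rho * (INR k * rho ^ k * Cmod (Cminus z w))).
    { apply Rmult_le_compat; auto. apply Cmod_ge_0. }
    rewrite S_INR. simpl pow. simpl pow in Hrk.
    assert (0 <= INR k) by apply pos_INR.
    assert (0 <= rho ^ k) by (apply pow_le; lra).
    assert (Cmod w ^ k * Cmod (Cminus z w) <= rho * rho ^ k * Cmod (Cminus z w)).
    { apply Rmult_le_compat_r; auto. lra. }
    assert (rho * (INR k * rho ^ k * Cmod (Cminus z w)) = INR k * (rho * rho ^ k) * Cmod (Cminus z w)) by ring.
    nra.
Qed.

Lemma csum_diff_bound (f g : nat -> C) c N : (forall k, Cmod (Cminus (f k) (g k)) <= c * (1/2)^k) ->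
  Cmod (Cminus (csum f N) (csum g N)) <= 2 * c * (1 - (1/2)^(S N)).
Proof.
  intros H. induction N.
  - simpl. specialize (H O). simpl in H. lra.
  - simpl csum. replace (Cminus (Cplus (csum f N) (f (S N))) (Cplus (csum g N) (g (S N))))
      with (Cplus (Cminus (csum f N) (csum g N)) (Cminus (f (S N)) (g (S N)))) by ring.
    eapply Rle_trans; [apply Cmod_triangle|]. specialize (H (S N)).
    simpl pow in *. lra.
Qed.

Lemma pser_lip e : ACB e -> forall rho, 1 <= rho -> exists L, 0 <= L /\ forall z w,
  Cmod z <= rho -> Cmod w <= rho ->
  Cmod (Cminus (pser e z) (pser e w)) <= L * Cmod (Cminus z w).
Proof.
  intros He rho Hr. destruct (He (4 * rho)) as [B HB]; [lra|].
  assert (HB0 : 0 <= B) by (specialize (HB O); simpl in HB;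
     generalize (Cmod_ge_0 (e O)); lra).
  exists (2 * B). split; [lra|]. intros z w Hz Hw.
  destruct (pser_approx e z He) as [C1 [_ H1]].
  destruct (pser_approx e w He) as [C2 [_ H2]].
  apply (lim_le_ev _ _ (C1 + C2) O). intros N _.
  assert (H3 : Cmod (Cminus (csum (uu e z) N) (csum (uu e w) N)) <= 2 * (B * Cmod (Cminus z w)) * (1 - (1/2)^(S N))).
  { apply csum_diff_bound. intros k. unfold uu.
    replace (Cminus (Cmult (e k) (Cpow z k)) (Cmult (e k) (Cpow w k)))
      with (Cmult (e k) (Cminus (Cpow z k) (Cpow w k))) by ring.
    rewrite Cmod_mult.
    assert (Hd := Cpow_diff z w rho k Hr Hz Hw).
    specialize (HB k).
    assert (H4 : INR k * rho ^ k <= (4 * rho) ^ k * (1/2) ^ k).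
    { rewrite <- Rpow_mult_distr. replace (4 * rho * (1/2)) with (2 * rho) by field.
      rewrite Rpow_mult_distr. apply Rmult_le_compat_r. apply pow_le; lra. apply INR_le_2pow. }
    assert (0 <= Cmod (e k)) by apply Cmod_ge_0.
    assert (0 <= Cmod (Cminus z w)) by apply Cmod_ge_0.
    eapply Rle_trans. apply Rmult_le_compat_l; [auto| exact Hd].
    assert (Cmod (e k) * (INR k * rho ^ k) <= Cmod (e k) * ((4 * rho) ^ k * (1/2)^k))
      by (apply Rmult_le_compat_l; auto).
    assert (0 <= (1/2)^k) by (apply Rlt_le, half_pow_pos).
    assert (Cmod (e k) * ((4 * rho) ^ k * (1/2)^k) <= B * (1/2)^k) by nra.
    nra. }
  replace (Cminus (pser e z) (pser e w)) with
    (Cplus (Cplus (Cminus (pser e z) (csum (uu e z) N)) (Cminus (csum (uu e z) N) (csum (uu e w) N)))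
       (Copp (Cminus (pser e w) (csum (uu e w) N)))) by ring.
  eapply Rle_trans; [apply Cmod_triangle|]. rewrite Cmod_opp.
  eapply Rle_trans; [apply Rplus_le_compat_r; apply Cmod_triangle|].
  specialize (H1 N). specialize (H2 N).
  assert (0 <= (1/2)^(S N)) by (apply Rlt_le, half_pow_pos).
  assert (0 <= B * Cmod (Cminus z w)) by (apply Rmult_le_pos; auto; apply Cmod_ge_0).
  nra.
Qed.


Definition circ (r t : R) : C := (r * cos t, r * sin t).

Lemma Cmod_circ r t : Cmod (circ r t) = Rabs r.
Proof.
  unfold Cmod, circ. simpl fst; simpl snd.
  replace ((r * cos t) ^ 2 + (r * sin t) ^ 2) with (r ^ 2) .
  - apply sqrt_pow2_abs_helper || (rewrite <- (pow2_abs r); apply sqrt_pow2, Rabs_pos).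
  - assert (H := sin2_cos2 t). unfold Rsqr in H. simpl. nra.
Qed.

Lemma circ_split r t : circ r t = Cmult (RtoC r) (circ 1 t).
Proof. unfold circ, Cmult, RtoC; simpl. f_equal; ring. Qed.

Lemma circ_mult a b : Cmult (circ 1 a) (circ 1 b) = circ 1 (a + b).
Proof. unfold circ, Cmult; simpl. rewrite cos_plus, sin_plus. f_equal; ring. Qed.

Lemma demoivre a k : Cpow (circ 1 a) k = circ 1 (INR k * a).
Proof.
  induction k.
  - simpl. unfold circ. rewrite Rmult_0_l, cos_0, sin_0. unfold RtoC. f_equal; ring.
  - simpl Cpow. rewrite IHk. rewrite Cmult_comm, circ_mult. f_equal. rewrite S_INR. ring.
Qed.

Lemma circ_diff r s t : Cmod (Cminus (circ r t) (circ s t)) = Rabs (r - s).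
Proof.
  replace (Cminus (circ r t) (circ s t)) with (circ (r - s) t).
  apply Cmod_circ. unfold circ, Cminus, Cplus, Copp; simpl. f_equal; ring.
Qed.

Lemma polar (w : C) : exists phi, w = circ (Cmod w) phi.
Proof.
  destruct (Req_dec (Cmod w) 0) as [H0|H0].
  - exists 0. apply Cmod_eq_0 in H0. subst. rewrite Cmod_0. unfold circ, RtoC. f_equal; ring.
  - assert (Hp : 0 < Cmod w) by (generalize (Cmod_ge_0 w); lra).
    destruct w as [x y].
    assert (Hm : Cmod (x, y) ^ 2 = x ^ 2 + y ^ 2) by (rewrite Cmod2_alt; reflexivity).
    set (m := Cmod (x, y)) in *.
    set (c := x / m).
    assert (Hc : -1 <= c <= 1).
    { assert (x ^ 2 <= m ^ 2) by nra.
      assert (-m <= x <= m) by (split; nra).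
      split; apply Rmult_le_reg_r with m; auto; unfold c, Rdiv;
        rewrite Rmult_assoc, Rinv_l by lra; lra. }
    assert (Hs : sqrt (1 - c²) = Rabs y / m).
    { rewrite <- (sqrt_pow2 (Rabs y / m)).
      2: { apply Rmult_le_pos. apply Rabs_pos. apply Rlt_le, Rinv_0_lt_compat; lra. }
      f_equal. unfold c, Rsqr.
      replace (1 - x / m * (x / m)) with ((m^2 - x^2)/m^2) by (field; lra).
      replace (m^2 - x^2) with (Rabs y ^2) by (rewrite pow2_abs; lra). field. lra. }
    destruct (Rle_dec 0 y) as [Hy|Hy].
    + exists (acos c). unfold circ. rewrite cos_acos, sin_acos by auto. rewrite Hs.
      rewrite Rabs_pos_eq by auto. unfold c. f_equal; field; lra.
    + exists (- acos c). unfold circ. rewrite cos_neg, sin_neg, cos_acos, sin_acos by auto. rewrite Hs.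
      rewrite Rabs_left by lra. unfold c. f_equal; field; lra.
Qed.

Lemma maxmod_spec e r : ACB e ->
  (forall t, Cmod (pser e (circ r t)) <= maxmod e r) /\
  (forall K, (forall t, Cmod (pser e (circ r t)) <= K) -> maxmod e r <= K).
Proof.
  intros He. destruct (pser_bound e He (Rabs r) (Rabs_pos r)) as [K0 HK0].
  assert (HK : forall t, Cmod (pser e (circ r t)) <= K0).
  { intros t. apply HK0. rewrite Cmod_circ. lra. }
  unfold maxmod.
  change (fun y : R => exists theta : R, y = Cmod (pser e (r * cos theta, r * sin theta)))
    with (fun y : R => exists theta : R, y = Cmod (pser e (circ r theta))).
  destruct (Lub_Rbar_correct (fun y : R => exists theta : R, y = Cmod (pser e (circ r theta))))
    as [Hub Hlub].
  assert (Hle : Rbar_le (Lub_Rbar (fun y : R => exists theta : R, y = Cmod (pser e (circ r theta)))) K0).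
  { apply Hlub. intros x [t Ht]. subst. simpl. apply HK. }
  assert (Hge := Hub _ (ex_intro _ 0 eq_refl)).
  destruct (Lub_Rbar (fun y : R => exists theta : R, y = Cmod (pser e (circ r theta)))) as [l| |];
    simpl in Hle, Hge; try contradiction.
  split.
  - intros t. apply (Hub _ (ex_intro _ t eq_refl)).
  - intros K HKK. assert (H := Hlub (Finite K)). simpl in H. apply H.
    intros x [t Ht]. subst. simpl. apply HKK.
Qed.

Lemma maxmod_ub e r t : ACB e -> Cmod (pser e (circ r t)) <= maxmod e r.
Proof. intros He. apply (maxmod_spec e r He). Qed.

Lemma maxmod_least e r K : ACB e -> (forall t, Cmod (pser e (circ r t)) <= K) -> maxmod e r <= K.
Proof. intros He. apply (maxmod_spec e r He). Qed.

Lemma maxmod_lip e : ACB e -> forall rho, 1 <= rho -> exists L, 0 <= L /\ forall r s,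
  0 <= r <= rho -> 0 <= s <= rho -> Rabs (maxmod e r - maxmod e s) <= L * Rabs (r - s).
Proof.
  intros He rho Hr. destruct (pser_lip e He rho Hr) as [L [HL0 HL]].
  exists L. split; auto.
  assert (Hone : forall r s, 0 <= r <= rho -> 0 <= s <= rho -> maxmod e r <= maxmod e s + L * Rabs (r - s)).
  { intros r s H1 H2. apply maxmod_least; auto. intros t.
    assert (H := HL (circ r t) (circ s t)).
    rewrite !Cmod_circ, circ_diff in H. rewrite !Rabs_pos_eq in H by lra.
    specialize (H ltac:(lra) ltac:(lra)).
    assert (H3 := maxmod_ub e s t He).
    replace (pser e (circ r t)) with (Cplus (pser e (circ s t)) (Cminus (pser e (circ r t)) (pser e (circ s t)))) by ring.
    eapply Rle_trans; [apply Cmod_triangle|]. lra. }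
  intros r s H1 H2. apply Rabs_le. split.
  - specialize (Hone s r H2 H1). rewrite Rabs_minus_sym in Hone. lra.
  - specialize (Hone r s H1 H2). lra.
Qed.


Lemma pser_approx_unif e : ACB e -> forall rho, 0 <= rho -> exists C, 0 <= C /\
  forall z, Cmod z <= rho -> forall N, Cmod (Cminus (pser e z) (csum (uu e z) N)) <= C * (1/2)^N.
Proof.
  intros He rho Hr. destruct (He (2 * (rho + 1))) as [B HB]; [lra|].
  assert (HB0 : 0 <= B) by (specialize (HB O); simpl in HB;
     generalize (Cmod_ge_0 (e O)); lra).
  exists (4 * B). split; [lra|]. intros z Hz N.
  eapply Rle_trans. apply (tail_bound e z (rho + 1) B N); auto; lra.
  apply Rmult_le_compat_l; [lra|]. apply pow_half_le.
  assert (H := Cmod_ge_0 z). split.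
  - apply Rmult_le_pos; auto. apply Rlt_le, Rinv_0_lt_compat; lra.
  - apply Rmult_le_reg_r with (2 * (rho + 1)); [lra|].
    unfold Rdiv. rewrite Rmult_assoc, Rinv_l by lra. lra.
Qed.

Fixpoint lsum (g : nat -> C) (N : nat) : C :=
  match N with O => RtoC 0 | S n => Cplus (lsum g n) (g n) end.

Lemma csum_plus f g M : csum (fun k => Cplus (f k) (g k)) M = Cplus (csum f M) (csum g M).
Proof. induction M; simpl; [auto|]. rewrite IHM. ring. Qed.

Lemma csum_zero M : csum (fun _ => RtoC 0) M = RtoC 0.
Proof. induction M; simpl; auto. rewrite IHM. ring. Qed.

Lemma csum_scal c f M : csum (fun k => Cmult c (f k)) M = Cmult c (csum f M).
Proof. induction M; simpl; auto. rewrite IHM. ring. Qed.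

Lemma csum_ext f g M : (forall k, f k = g k) -> csum f M = csum g M.
Proof. intros H. induction M; simpl; rewrite ?IHM, ?H; auto. Qed.

Lemma lsum_ext f g N : (forall k, f k = g k) -> lsum f N = lsum g N.
Proof. intros H. induction N; simpl; rewrite ?IHN, ?H; auto. Qed.

Lemma lsum_swap (F : nat -> nat -> C) N M :
  lsum (fun l => csum (F l) M) N = csum (fun k => lsum (fun l => F l k) N) M.
Proof.
  induction N; simpl.
  - rewrite csum_zero. auto.
  - rewrite IHN. rewrite <- csum_plus. auto.
Qed.

Lemma lsum_scal c g N : lsum (fun l => Cmult c (g l)) N = Cmult c (lsum g N).
Proof. induction N; simpl. ring. rewrite IHN. ring. Qed.

Lemma lsum_minus f g N : lsum (fun l => Cminus (f l) (g l)) N = Cminus (lsum f N) (lsum g N).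
Proof. induction N; simpl. ring. rewrite IHN. ring. Qed.

Lemma lsum_bound g b N : (forall l, Cmod (g l) <= b) -> Cmod (lsum g N) <= INR N * b.
Proof.
  intros H. assert (Hb : 0 <= b) by (eapply Rle_trans; [apply Cmod_ge_0| apply (H O)]).
  induction N.
  - simpl. rewrite Cmod_0. lra.
  - change (lsum g (S N)) with (Cplus (lsum g N) (g N)).
    eapply Rle_trans; [apply Cmod_triangle|]. specialize (H N). rewrite S_INR. lra.
Qed.

Lemma geom_C w N : Cmult (Cminus w 1) (lsum (fun l => Cpow w l) N) = Cminus (Cpow w N) 1.
Proof. induction N; simpl. ring. rewrite Cmult_plus_distr_l, IHN. ring. Qed.

Lemma lsum_one N : lsum (fun l => Cpow (RtoC 1) l) N = RtoC (INR N).
Proof.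
  induction N. simpl. auto. change (lsum (fun l => Cpow (RtoC 1) l) (S N)) with
    (Cplus (lsum (fun l => Cpow (RtoC 1) l) N) (Cpow (RtoC 1) N)). rewrite IHN, Cpow_1_l, S_INR.
  unfold RtoC, Cplus; simpl. f_equal; ring.
Qed.

Definition om (N : nat) : C := circ 1 (2 * PI / INR N).

Lemma om_pow_N N : (0 < N)%nat -> Cpow (om N) N = RtoC 1.
Proof.
  intros H. unfold om. rewrite demoivre.
  replace (INR N * (2 * PI / INR N)) with (2 * PI).
  - unfold circ. rewrite cos_2PI, sin_2PI. unfold RtoC. f_equal; ring.
  - field. apply not_0_INR. lia.
Qed.

Lemma Cmod_om_pow N j : Cmod (Cpow (om N) j) = 1.
Proof. rewrite Cmod_pow. unfold om. rewrite Cmod_circ, Rabs_R1. apply pow1. Qed.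

Lemma om_pow_ne1 N r : (0 < r < N)%nat -> Cpow (om N) r <> RtoC 1.
Proof.
  intros H Heq. unfold om in Heq. rewrite demoivre in Heq.
  unfold circ, RtoC in Heq. injection Heq as Hc Hs.
  rewrite Rmult_1_l in Hc, Hs.
  set (x := INR r * (2 * PI / INR N)) in *.
  assert (HN : 0 < INR N) by (apply lt_0_INR; lia).
  assert (Hr : 0 < INR r) by (apply lt_0_INR; lia).
  assert (Hrn : INR r < INR N) by (apply lt_INR; lia).
  assert (Hpi := PI_RGT_0).
  assert (Hx0 : 0 < x) by (unfold x; apply Rmult_lt_0_compat; auto; apply Rdiv_lt_0_compat; lra).
  assert (Hx1 : x < 2 * PI).
  { unfold x. replace (INR r * (2 * PI / INR N)) with (2 * PI * (INR r / INR N)) by (field; lra).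
    assert (INR r / INR N < 1).
    { apply Rmult_lt_reg_r with (INR N); auto. unfold Rdiv. rewrite Rmult_assoc, Rinv_l; lra. }
    nra. }
  destruct (sin_eq_O_2PI_0 x) as [H0|[H0|H0]]; try lra.
  rewrite H0, cos_PI in Hc. lra.
Qed.

Lemma Cmult_eq0_l (x y : C) : x <> RtoC 0 -> Cmult x y = RtoC 0 -> y = RtoC 0.
Proof.
  intros Hx H. replace y with (Cmult (Cinv x) (Cmult x y)) by (field; auto).
  rewrite H. ring.
Qed.

Lemma om_pow_pow_N N j : (0 < N)%nat -> Cpow (Cpow (om N) j) N = RtoC 1.
Proof.
  intros H. rewrite <- Cpow_mult_r, Nat.mul_comm, Cpow_mult_r, om_pow_N by auto.
  apply Cpow_1_l.
Qed.

Lemma delta_zero N j : (0 < N)%nat -> Cpow (om N) j <> RtoC 1 ->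
  lsum (fun l => Cpow (Cpow (om N) j) l) N = RtoC 0.
Proof.
  intros HN Hne. apply (Cmult_eq0_l (Cminus (Cpow (om N) j) 1)).
  - intros Hc. apply Hne. replace (Cpow (om N) j) with (Cplus (Cminus (Cpow (om N) j) 1) 1) by ring.
    rewrite Hc. ring.
  - rewrite geom_C, om_pow_pow_N by auto. unfold Cminus, Cplus, Copp, RtoC; simpl; f_equal; ring.
Qed.

Lemma delta_bound N j : Cmod (lsum (fun l => Cpow (Cpow (om N) j) l) N) <= INR N.
Proof.
  rewrite <- (Rmult_1_r (INR N)). apply lsum_bound. intros l.
  rewrite <- Cpow_mult_r, Cmod_om_pow. lra.
Qed.

Lemma csum_ind_gen (v : C) m M :
  csum (fun k => if Nat.eq_dec k m then v else RtoC 0) M = if le_lt_dec m M then v else RtoC 0.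
Proof.
  induction M.
  - cbn [csum]. destruct (Nat.eq_dec 0 m); destruct (le_lt_dec m 0); auto; lia.
  - change (csum (fun k => if Nat.eq_dec k m then v else RtoC 0) (S M)) with
      (Cplus (csum (fun k => if Nat.eq_dec k m then v else RtoC 0) M)
             (if Nat.eq_dec (S M) m then v else RtoC 0)).
    rewrite IHM.
    destruct (Nat.eq_dec (S M) m); destruct (le_lt_dec m M); destruct (le_lt_dec m (S M));
      try lia; ring.
Qed.

Lemma csum_ind (v : C) m M : (m <= M)%nat ->
  csum (fun k => if Nat.eq_dec k m then v else RtoC 0) M = v.
Proof. intros H. rewrite csum_ind_gen. destruct (le_lt_dec m M); auto; lia. Qed.

Lemma Cmult_minus_distr_l (a b c : C) : Cminus (Cmult a b) (Cmult a c) = Cmult a (Cminus b c).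
Proof. ring. Qed.

Lemma quarter_bound k N : (N <= k)%nat -> (1/4)^k <= (1/2)^N * (1/2)^k.
Proof.
  intros H. replace (1/4) with ((1/2)*(1/2)) by field. rewrite Rpow_mult_distr.
  apply Rmult_le_compat_r. apply Rlt_le, half_pow_pos. apply half_pow_mono; auto.
Qed.

Lemma cauchy e R Bc m : ACB e -> 0 < R ->
  (forall t, Cmod (pser e (circ R t)) <= Bc) -> Cmod (e m) * R ^ m <= Bc.
Proof.
  intros He HR HBc.
  destruct (pser_approx_unif e He R ltac:(lra)) as [C [HC HA]].
  destruct (He (4 * R)) as [B' HB']; [lra|].
  assert (HB0 : 0 <= B') by (specialize (HB' O); simpl in HB';
     generalize (Cmod_ge_0 (e O)); lra).
  apply (lim_le_ev _ Bc (2 * B') (S m)). intros N HN.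
  apply (lim_le_ev _ (Bc + 2 * B' * (1/2)^N) C m). intros M HM.
  assert (HN0 : (0 < N)%nat) by lia.
  assert (HNR : 0 < INR N) by (apply lt_0_INR; lia).
  set (z := fun l => Cmult (RtoC R) (Cpow (om N) l)).
  assert (Hz : forall l, Cmod (pser e (z l)) <= Bc).
  { intros l. unfold z, om. rewrite demoivre, <- circ_split. apply HBc. }
  assert (Hzm : forall l, Cmod (z l) = R).
  { intros l. unfold z. rewrite Cmod_mult, Cmod_om_pow, Cmod_R, Rabs_pos_eq; lra. }
  set (c := fun l => Cpow (Cpow (om N) (N - m)) l).
  assert (Hc : forall l, Cmod (c l) = 1).
  { intros l. unfold c. rewrite <- Cpow_mult_r. apply Cmod_om_pow. }
  set (Avg := Cmult (Cinv (INR N)) (lsum (fun l => Cmult (c l) (pser e (z l))) N)).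
  set (AM := Cmult (Cinv (INR N)) (lsum (fun l => Cmult (c l) (csum (uu e (z l)) M)) N)).
  assert (Hinv : Cmod (Cinv (RtoC (INR N))) = / INR N).
  { rewrite Cmod_inv, Cmod_R, Rabs_pos_eq; auto; try lra.
    intros Heq. apply RtoC_inj in Heq. lra. }
  assert (H1 : Cmod Avg <= Bc).
  { unfold Avg. rewrite Cmod_mult, Hinv.
    assert (Cmod (lsum (fun l => Cmult (c l) (pser e (z l))) N) <= INR N * Bc).
    { apply lsum_bound. intros l. rewrite Cmod_mult, Hc. specialize (Hz l). lra. }
    apply Rmult_le_reg_l with (INR N); auto. rewrite <- Rmult_assoc, Rinv_r; lra. }
  assert (H2 : Cmod (Cminus Avg AM) <= C * (1/2)^M).
  { unfold Avg, AM. rewrite Cmult_minus_distr_l, <- lsum_minus, Cmod_mult, Hinv.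
    assert (Cmod (lsum (fun l => Cminus (Cmult (c l) (pser e (z l))) (Cmult (c l) (csum (uu e (z l)) M))) N)
      <= INR N * (C * (1/2)^M)).
    { apply lsum_bound. intros l. rewrite Cmult_minus_distr_l, Cmod_mult, Hc.
      specialize (HA (z l) ltac:(rewrite Hzm; lra) M). lra. }
    apply Rmult_le_reg_l with (INR N); auto. rewrite <- Rmult_assoc, Rinv_r; lra. }
  set (term := fun k => Cmult (Cmult (e k) (Cpow (RtoC R) k))
     (Cmult (Cinv (INR N)) (lsum (fun l => Cpow (Cpow (om N) (N - m + k)) l) N))).
  assert (H3 : AM = csum term M).
  { unfold AM. rewrite (lsum_ext _ (fun l => csum (fun k => Cmult (c l) (uu e (z l) k)) M)).
    2: { intros l. rewrite csum_scal. auto. }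
    rewrite lsum_swap, <- csum_scal. apply csum_ext. intros k. unfold term.
    rewrite (lsum_ext _ (fun l => Cmult (Cmult (e k) (Cpow (RtoC R) k)) (Cpow (Cpow (om N) (N - m + k)) l))).
    { rewrite lsum_scal. change (lsum (Cpow (Cpow (om N) (N - m + k))) N) with (lsum (fun l => Cpow (Cpow (om N) (N - m + k)) l) N). ring. }
    intros l. unfold c, uu, z. rewrite Cpow_mult_l, Cpow_add_r, Cpow_mult_l.
    rewrite <- !Cpow_mult_r. rewrite (Nat.mul_comm l k). ring. }
  assert (H4 : Cmod (Cminus AM (Cmult (e m) (Cpow (RtoC R) m))) <= 2 * B' * (1/2)^N).
  { rewrite H3, <- (csum_ind (Cmult (e m) (Cpow (RtoC R) m)) m M HM).
    eapply Rle_trans. apply (csum_diff_bound _ _ (B' * (1/2)^N)).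
    2: { assert (0 <= B' * (1/2)^N) by (apply Rmult_le_pos; auto; apply Rlt_le, half_pow_pos).
         assert (0 <= (1/2)^(S M)) by (apply Rlt_le, half_pow_pos). nra. }
    intros k. unfold term. destruct (Nat.eq_dec k m) as [->|Hkm].
    - replace (N - m + m)%nat with N by lia.
      rewrite (lsum_ext _ (fun l => Cpow (RtoC 1) l)) by (intros; rewrite om_pow_N; auto).
      rewrite lsum_one.
      replace (Cminus (Cmult (Cmult (e m) (Cpow R m)) (Cmult (/ INR N) (INR N)))
         (Cmult (e m) (Cpow R m))) with (RtoC 0).
      + rewrite Cmod_0. apply Rmult_le_pos; [apply Rmult_le_pos; auto|]; apply Rlt_le, half_pow_pos.
      + field. intros Heq. apply RtoC_inj in Heq. lra.
    - destruct (lt_dec k N) as [HkN|HkN].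
      + rewrite delta_zero; auto.
        * replace (Cminus (Cmult (Cmult (e k) (Cpow R k)) (Cmult (/ INR N) 0)) 0) with (RtoC 0) by ring.
          rewrite Cmod_0. apply Rmult_le_pos; [apply Rmult_le_pos; auto|]; apply Rlt_le, half_pow_pos.
        * destruct (lt_dec k m).
          -- apply om_pow_ne1. lia.
          -- replace (N - m + k)%nat with (N + (k - m))%nat by lia.
             rewrite Cpow_add_r, om_pow_N, Cmult_1_l by auto. apply om_pow_ne1. lia.
      + replace (Cminus (Cmult (Cmult (e k) (Cpow R k)) (Cmult (/ INR N) (lsum (fun l : nat => Cpow (Cpow (om N) (N - m + k)) l) N))) 0)
          with (Cmult (Cmult (e k) (Cpow R k)) (Cmult (/ INR N) (lsum (fun l : nat => Cpow (Cpow (om N) (N - m + k)) l) N))) by ring.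
        rewrite !Cmod_mult, Hinv, Cmod_real_pow by lra.
        assert (Hd := delta_bound N (N - m + k)).
        assert (Hdd : / INR N * Cmod (lsum (fun l : nat => Cpow (Cpow (om N) (N - m + k)) l) N) <= 1).
        { apply Rmult_le_reg_l with (INR N); auto. rewrite <- Rmult_assoc, Rinv_r; lra. }
        assert (Hek : Cmod (e k) * R ^ k <= B' * (1/4)^k).
        { specialize (HB' k). replace (R ^ k) with ((4 * R)^k * (1/4)^k).
          - assert (0 <= (1/4)^k) by (apply pow_le; lra). rewrite <- Rmult_assoc. apply Rmult_le_compat_r; auto.
          - rewrite <- Rpow_mult_distr. f_equal. field. }
        assert (Hq := quarter_bound k N ltac:(lia)).
        assert (0 <= Cmod (e k) * R ^ k) by (apply Rmult_le_pos; [apply Cmod_ge_0| apply pow_le; lra]).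
        assert (0 <= / INR N * Cmod (lsum (fun l : nat => Cpow (Cpow (om N) (N - m + k)) l) N))
          by (apply Rmult_le_pos; [apply Rlt_le, Rinv_0_lt_compat; auto| apply Cmod_ge_0]).
        assert (Cmod (e k) * R ^ k * (/ INR N * Cmod (lsum (fun l : nat => Cpow (Cpow (om N) (N - m + k)) l) N)) <= Cmod (e k) * R ^ k) by nra.
        nra. }
  assert (Hem : Cmod (e m) * R ^ m = Cmod (Cmult (e m) (Cpow (RtoC R) m))).
  { rewrite Cmod_mult, Cmod_real_pow by lra. auto. }
  rewrite Hem.
  replace (Cmult (e m) (Cpow (RtoC R) m)) with
    (Cplus (Cplus Avg (Copp (Cminus Avg AM))) (Copp (Cminus AM (Cmult (e m) (Cpow (RtoC R) m))))) by ring.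
  eapply Rle_trans; [apply Cmod_triangle|]. rewrite Cmod_opp.
  eapply Rle_trans; [apply Rplus_le_compat_r; apply Cmod_triangle|]. rewrite Cmod_opp.
  lra.
Qed.


Lemma cont_from_bound (h k1 k2 : R -> R) x0 L : 0 <= L ->
  continuity_pt k1 x0 -> continuity_pt k2 x0 ->
  (forall x, Rabs (h x - h x0) <= L * (Rabs (k1 x - k1 x0) + Rabs (k2 x - k2 x0))) ->
  continuity_pt h x0.
Proof.
  intros HL H1 H2 H. intros eps Heps.
  set (eps' := eps / (2 * (L + 1))).
  assert (He' : 0 < eps') by (unfold eps'; apply Rdiv_lt_0_compat; lra).
  destruct (H1 eps' He') as [d1 [Hd1 Hk1]].
  destruct (H2 eps' He') as [d2 [Hd2 Hk2]].
  exists (Rmin d1 d2). split. apply Rmin_pos; auto.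
  intros x [Hx Hd]. simpl in *. unfold R_dist in *.
  assert (A1 := Hk1 x (conj Hx (Rlt_le_trans _ _ _ Hd (Rmin_l _ _)))).
  assert (A2 := Hk2 x (conj Hx (Rlt_le_trans _ _ _ Hd (Rmin_r _ _)))).
  simpl in A1, A2. unfold R_dist in A1, A2.
  eapply Rle_lt_trans. apply H.
  assert (L * (Rabs (k1 x - k1 x0) + Rabs (k2 x - k2 x0)) <= L * (2 * eps'))
    by (apply Rmult_le_compat_l; lra).
  assert (L * (2 * eps') < eps).
  { unfold eps'. replace (L * (2 * (eps / (2 * (L + 1))))) with (eps * (L / (L + 1))) by (field; lra).
    assert (L / (L + 1) < 1).
    { apply Rmult_lt_reg_r with (L + 1); [lra|]. unfold Rdiv. rewrite Rmult_assoc, Rinv_l; lra. }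
    nra. }
  lra.
Qed.

Lemma polar_range (w : C) : exists phi, -PI <= phi <= PI /\ w = circ (Cmod w) phi.
Proof.
  destruct (polar w) as [phi Hphi].
  destruct (Req_dec (Cmod w) 0) as [H0|H0].
  - exists 0. split. generalize PI_RGT_0; lra. rewrite Hphi at 1. rewrite H0. unfold circ. f_equal; ring.
  - assert (Hp : 0 < Cmod w) by (generalize (Cmod_ge_0 w); lra).
    set (c := cos phi).
    assert (Hc : -1 <= c <= 1) by (unfold c; apply COS_bound).
    destruct (Rle_dec 0 (sin phi)) as [Hs|Hs].
    + exists (acos c). split. generalize (acos_bound c); generalize PI_RGT_0; lra.
      rewrite Hphi at 1. unfold circ. rewrite cos_acos, sin_acos by auto. unfold c.
      f_equal. f_equal. rewrite <- (sqrt_pow2 (sin phi)) by auto. f_equal.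
      generalize (sin2_cos2 phi). unfold Rsqr. intros; simpl; lra.
    + exists (- acos c). split. generalize (acos_bound c); generalize PI_RGT_0; lra.
      rewrite Hphi at 1. unfold circ. rewrite cos_neg, sin_neg, cos_acos, sin_acos by auto. unfold c.
      f_equal. f_equal.
      replace (1 - (cos phi)²) with ((- sin phi)^2). rewrite sqrt_pow2 by lra. ring.
      generalize (sin2_cos2 phi). unfold Rsqr. intros; simpl; lra.
Qed.

Lemma maxmod_attained e r : ACB e -> 0 < r -> exists t, Cmod (pser e (circ r t)) = maxmod e r.
Proof.
  intros He Hr.
  destruct (pser_lip e He (r + 1) ltac:(lra)) as [L [HL0 HL]].
  destruct (continuity_ab_maj (fun t => Cmod (pser e (circ r t))) (-PI) PI) as [t0 [Ht0 Hr0]].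
  { generalize PI_RGT_0; lra. }
  { intros t _. apply (cont_from_bound _ cos sin t (L * r)).
    - apply Rmult_le_pos; lra.
    - apply continuity_cos.
    - apply continuity_sin.
    - intros x.
      assert (H := HL (circ r x) (circ r t)). rewrite !Cmod_circ, Rabs_pos_eq in H by lra.
      specialize (H ltac:(lra) ltac:(lra)).
      assert (Hc : Cmod (Cminus (circ r x) (circ r t)) <= r * (Rabs (cos x - cos t) + Rabs (sin x - sin t))).
      { eapply Rle_trans. apply Cmod_le_sum. unfold circ; simpl.
        replace (r * cos x + - (r * cos t)) with (r * (cos x - cos t)) by ring.
        replace (r * sin x + - (r * sin t)) with (r * (sin x - sin t)) by ring.
        rewrite !Rabs_mult, Rabs_pos_eq by lra. lra. }
      assert (Habs : Rabs (Cmod (pser e (circ r x)) - Cmod (pser e (circ r t)))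
                 <= Cmod (Cminus (pser e (circ r x)) (pser e (circ r t)))).
      { apply Rabs_le. split.
        - assert (T := Cmod_triangle (pser e (circ r x)) (Cminus (pser e (circ r t)) (pser e (circ r x)))).
          replace (Cplus (pser e (circ r x)) (Cminus (pser e (circ r t)) (pser e (circ r x)))) with (pser e (circ r t)) in T by ring.
          replace (Cminus (pser e (circ r t)) (pser e (circ r x))) with (Copp (Cminus (pser e (circ r x)) (pser e (circ r t)))) in T by ring.
          rewrite Cmod_opp in T. lra.
        - assert (T := Cmod_triangle (pser e (circ r t)) (Cminus (pser e (circ r x)) (pser e (circ r t)))).
          replace (Cplus (pser e (circ r t)) (Cminus (pser e (circ r x)) (pser e (circ r t)))) with (pser e (circ r x)) in T by ring.
          lra. }
      eapply Rle_trans. exact Habs. eapply Rle_trans. exact H.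
      rewrite Rmult_assoc. apply Rmult_le_compat_l; auto. }
  exists t0. apply Rle_antisym.
  - apply maxmod_ub; auto.
  - apply maxmod_least; auto. intros t.
    destruct (polar_range (circ r t)) as [phi [Hphi Heq]].
    rewrite Cmod_circ, Rabs_pos_eq in Heq by lra. rewrite Heq. apply Ht0. auto.
Qed.


Lemma cont_from_bound_loc (h : R -> R) x0 L d0 : 0 <= L -> 0 < d0 ->
  (forall x, Rabs (x - x0) < d0 -> Rabs (h x - h x0) <= L * Rabs (x - x0)) ->
  continuity_pt h x0.
Proof.
  intros HL Hd0 H. intros eps Heps.
  exists (Rmin d0 (eps / (L + 1))). split.
  { apply Rmin_pos; auto. apply Rdiv_lt_0_compat; lra. }
  intros x [Hx Hd]. simpl in *. unfold R_dist in *.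
  assert (Hd1 : Rabs (x - x0) < d0) by (eapply Rlt_le_trans; [exact Hd| apply Rmin_l]).
  assert (Hd2 : Rabs (x - x0) < eps / (L + 1)) by (eapply Rlt_le_trans; [exact Hd| apply Rmin_r]).
  eapply Rle_lt_trans. apply H; auto.
  assert (L * Rabs (x - x0) <= L * (eps / (L + 1))) by (apply Rmult_le_compat_l; lra).
  assert (L * (eps / (L + 1)) < eps).
  { replace (L * (eps / (L + 1))) with (eps * (L / (L + 1))) by (field; lra).
    assert (L / (L + 1) < 1).
    { apply Rmult_lt_reg_r with (L + 1); [lra|]. unfold Rdiv. rewrite Rmult_assoc, Rinv_l; lra. }
    nra. }
  lra.
Qed.

Lemma maxmod_cont e c : ACB e -> 0 < c -> continuity_pt (maxmod e) c.
Proof.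
  intros He Hc. destruct (maxmod_lip e He (2 * c + 1) ltac:(lra)) as [L [HL Hlip]].
  apply (cont_from_bound_loc _ c L c); auto.
  intros x Hx. apply Hlip.
  - apply Rabs_def2 in Hx. lra.
  - lra.
Qed.

Definition gg (e : nat -> C) (n : nat) (r : R) : R := maxmod e r / r ^ n.

Lemma gg_cont e n c : ACB e -> 0 < c -> continuity_pt (gg e n) c.
Proof.
  intros He Hc. unfold gg.
  change (fun r => maxmod e r / r ^ n) with (fun r => (maxmod e r) * / (r ^ n)).
  apply (continuity_pt_div (maxmod e) (fun r => r ^ n)).
  - apply maxmod_cont; auto.
  - apply derivable_continuous_pt. apply derivable_pt_pow.
  - apply pow_nonzero. lra.
Qed.

Lemma maxmod_ge_coef e r k : ACB e -> 0 < r -> Cmod (e k) * r ^ k <= maxmod e r.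
Proof.
  intros He Hr. apply cauchy; auto. intros t. apply maxmod_ub; auto.
Qed.

Lemma maxmod_pos e r k : ACB e -> 0 < r -> e k <> RtoC 0 -> 0 < maxmod e r.
Proof.
  intros He Hr Hk. eapply Rlt_le_trans; [|apply (maxmod_ge_coef e r k He Hr)].
  apply Rmult_lt_0_compat. apply Cmod_gt_0; auto. apply pow_lt; auto.
Qed.

Lemma gg_ge_coef e n r k : ACB e -> 0 < r -> Cmod (e k) * r ^ k / r ^ n <= gg e n r.
Proof.
  intros He Hr. unfold gg. unfold Rdiv. apply Rmult_le_compat_r.
  apply Rlt_le, Rinv_0_lt_compat, pow_lt; auto. apply maxmod_ge_coef; auto.
Qed.


Lemma div_le_cross a b c d : 0 < b -> 0 < d -> a / b <= c / d -> a * d <= c * b.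
Proof.
  intros Hb Hd H. apply Rmult_le_compat_r with (r := b * d) in H; [|nra].
  replace (a / b * (b * d)) with (a * d) in H by (field; lra).
  replace (c / d * (b * d)) with (c * b) in H by (field; lra). auto.
Qed.

Lemma rd_mono a k n x y : ACB a -> a k <> RtoC 0 ->
  is_rdiamond a n x -> is_rdiamond a (S n) y -> x <= y.
Proof.
  intros Ha Hk [Hx Hxm] [Hy Hym].
  assert (Mx := maxmod_pos a x k Ha Hx Hk).
  assert (My := maxmod_pos a y k Ha Hy Hk).
  assert (A := div_le_cross _ _ _ _ (pow_lt x n Hx) (pow_lt y n Hy) (Hxm y Hy)).
  assert (B := div_le_cross _ _ _ _ (pow_lt y (S n) Hy) (pow_lt x (S n) Hx) (Hym x Hx)).
  simpl pow in B.
  assert (Hxn := pow_lt x n Hx). assert (Hyn := pow_lt y n Hy).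
  assert (C1 : maxmod a x * y ^ n * y <= maxmod a y * x ^ n * y) by (apply Rmult_le_compat_r; lra).
  assert (C2 : maxmod a y * x ^ n * x <= maxmod a y * x ^ n * y).
  { replace (maxmod a y * x ^ n * x) with (maxmod a y * (x * x ^ n)) by ring.
    replace (maxmod a x * y ^ n * y) with (maxmod a x * (y * y ^ n)) in C1 by ring. lra. }
  apply Rmult_le_reg_l with (maxmod a y * x ^ n). nra.
  lra.
Qed.

Lemma exists_big_coef a N : transcendental_coeffs a -> exists m, (N < m)%nat /\ a m <> RtoC 0.
Proof. intros Ht. destruct (Ht (S N)) as [k [Hk1 Hk2]]. exists k. split; auto; lia. Qed.

Lemma rd_exists a n0 n : entire_coeffs a -> transcendental_coeffs a -> first_nonzero a n0 ->
  (n0 < n)%nat -> exists r, is_rdiamond a n r.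
Proof.
  intros Hent Ht [Hn0 _] Hn. assert (Ha := entire_ACB a Hent).
  set (g1 := gg a n 1).
  assert (Hg1 : 0 < g1) by (unfold g1, gg; rewrite pow1; unfold Rdiv; rewrite Rinv_1, Rmult_1_r;
    apply (maxmod_pos a 1 n0); auto; lra).
  set (c0 := Cmod (a n0)). assert (Hc0 : 0 < c0) by (apply Cmod_gt_0; auto).
  destruct (exists_big_coef a n Ht) as [m [Hm1 Hm2]].
  set (cm := Cmod (a m)). assert (Hcm : 0 < cm) by (apply Cmod_gt_0; auto).
  set (eps := Rmin (1/2) (c0 / (g1 + 1))).
  assert (Heps : 0 < eps) by (apply Rmin_pos; [lra| apply Rdiv_lt_0_compat; lra]).
  assert (Heps1 : eps <= 1/2) by apply Rmin_l.
  assert (Heps2 : eps <= c0 / (g1 + 1)) by apply Rmin_r.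
  set (RR := Rmax 1 ((g1 + 1) / cm) + 1).
  assert (HRR1 : 2 <= RR) by (unfold RR; generalize (Rmax_l 1 ((g1 + 1) / cm)); lra).
  assert (HRR2 : (g1 + 1) / cm <= RR - 1) by (unfold RR; generalize (Rmax_r 1 ((g1 + 1) / cm)); lra).
  assert (Hsmall : forall s, 0 < s < eps -> g1 < gg a n s).
  { intros s Hs. eapply Rlt_le_trans; [|apply (gg_ge_coef a n s n0); auto; lra].
    assert (Hpow : s ^ n = s ^ n0 * s ^ (n - n0)) by (rewrite <- pow_add; f_equal; lia).
    rewrite Hpow. fold c0.
    assert (Hs0 : 0 < s ^ n0) by (apply pow_lt; lra).
    assert (Hsd : s ^ (n - n0) <= s).
    { destruct (n - n0)%nat as [|d] eqn:Hd; [lia|]. simpl.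
      assert (s ^ d <= 1) by (apply pow_le1_alt || (clear -Hs Heps1; induction d; simpl; [lra|nra])). 
      nra. }
    assert (Hsd0 : 0 < s ^ (n - n0)) by (apply pow_lt; lra).
    replace (c0 * s ^ n0 / (s ^ n0 * s ^ (n - n0))) with (c0 / s ^ (n - n0)) by (field; lra).
    apply Rlt_le_trans with (c0 / s).
    - assert (s < c0 / (g1 + 1)) by lra.
      apply Rmult_lt_reg_r with (s * (g1 + 1) / c0). apply Rdiv_lt_0_compat; nra.
      replace (g1 * (s * (g1 + 1) / c0)) with (s * (g1 * (g1 + 1)) / c0) by (field; lra).
      replace (c0 / s * (s * (g1 + 1) / c0)) with (g1 + 1) by (field; split; lra).
      assert (s * (g1 + 1) < c0).
      { apply Rmult_lt_reg_r with (/ (g1 + 1)). apply Rinv_0_lt_compat; lra.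
        rewrite Rmult_assoc, Rinv_r by lra. lra. }
      apply Rmult_lt_reg_r with c0; auto. unfold Rdiv. rewrite Rmult_assoc, Rinv_l by lra.
      nra.
    - unfold Rdiv. apply Rmult_le_compat_l; [lra|]. apply Rinv_le_contravar; auto. }
  assert (Hbig : forall s, RR < s -> g1 < gg a n s).
  { intros s Hs. eapply Rlt_le_trans; [|apply (gg_ge_coef a n s m); auto; lra].
    assert (Hpow : s ^ m = s ^ n * s ^ (m - n)) by (rewrite <- pow_add; f_equal; lia).
    rewrite Hpow. fold cm.
    assert (Hs0 : 0 < s ^ n) by (apply pow_lt; lra).
    replace (cm * (s ^ n * s ^ (m - n)) / s ^ n) with (cm * s ^ (m - n)) by (field; lra).
    assert (Hsd : s <= s ^ (m - n)).
    { destruct (m - n)%nat as [|d] eqn:Hd; [lia|]. simpl.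
      assert (1 <= s ^ d) by (apply pow_R1_Rle; lra). nra. }
    assert (g1 + 1 <= cm * (RR - 1)).
    { apply Rmult_le_reg_r with (/ cm). apply Rinv_0_lt_compat; auto.
      replace (cm * (RR - 1) * / cm) with (RR - 1) by (field; lra). exact HRR2. }
    nra. }
  destruct (continuity_ab_min (gg a n) eps RR) as [r [Hr1 Hr2]]; [lra| |].
  { intros c Hc. apply gg_cont; auto; lra. }
  exists r. split; [lra|]. intros s Hs. fold (gg a n r). fold (gg a n s).
  assert (Hr1' := Hr1 1 ltac:(lra)). fold g1 in Hr1'.
  destruct (Rlt_dec s eps). { assert (H := Hsmall s ltac:(lra)). lra. }
  destruct (Rlt_dec RR s). { assert (H := Hbig s ltac:(lra)). lra. }
  apply Hr1. lra.
Qed.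

Lemma rd_lim a n0 rd : ACB a -> a n0 <> RtoC 0 ->
  (forall n, (n0 < n)%nat -> is_rdiamond a n (rd n)) -> is_lim_seq rd p_infty.
Proof.
  intros Ha Hn0 Hrd.
  assert (Hmono : forall n, (n0 < n)%nat -> rd n <= rd (S n)).
  { intros n Hn. apply (rd_mono a n0 n); auto. }
  apply is_lim_seq_spec. intros M0.
  assert (Hex : exists N, (n0 < N)%nat /\ M0 < rd N).
  { apply NNPP. intros Hno.
    assert (Hle : forall N, (n0 < N)%nat -> rd N <= Rmax M0 1).
    { intros N HN. destruct (Rle_dec (rd N) M0). eapply Rle_trans; [eauto|apply Rmax_l].
      exfalso. apply Hno. exists N. split; auto. lra. }
    set (R := Rmax M0 1). assert (HR : 1 <= R) by apply Rmax_r.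
    set (K := maxmod a (2 * R)). set (c0 := Cmod (a n0)).
    assert (Hc0 : 0 < c0) by (apply Cmod_gt_0; auto).
    assert (HK : 0 < K) by (apply (maxmod_pos a _ n0); auto; lra).
    destruct (pow_lt_1_zero (1/2) ltac:(rewrite Rabs_pos_eq; lra) (c0 / (K + 1))) as [N0 HN0].
    { apply Rdiv_lt_0_compat; lra. }
    set (n := S (max N0 n0)).
    assert (Hn : (n0 < n)%nat) by (unfold n; lia).
    assert (Hsmall := HN0 n ltac:(unfold n; lia)).
    rewrite Rabs_pos_eq in Hsmall by (apply pow_le; lra).
    destruct (Hrd n Hn) as [Hpos Hmin].
    specialize (Hmin (2 * R) ltac:(lra)).
    assert (Hrn := Hle n Hn).
    assert (Hlow := gg_ge_coef a n (rd n) n0 Ha Hpos). unfold gg in Hlow. fold c0 in Hlow.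
    set (d := (n - n0)%nat).
    assert (Hsplit : forall x, x ^ n = x ^ n0 * x ^ d) by (intros; rewrite <- pow_add; f_equal; unfold d; lia).
    rewrite Hsplit in Hlow, Hmin.
    assert (Hr0 : 0 < rd n ^ n0) by (apply pow_lt; lra).
    assert (Hrd0 : 0 < rd n ^ d) by (apply pow_lt; lra).
    assert (HRd : rd n ^ d <= R ^ d) by (apply pow_incr; split; [lra|]; unfold R; lra).
    assert (HR0 : 0 < R ^ d) by (apply pow_lt; lra).
    assert (HRn0 : 1 <= R ^ n0) by (apply pow_R1_Rle; lra).
    assert (H2n : 0 < 2 ^ n) by (apply pow_lt; lra).
    replace (c0 * rd n ^ n0 / (rd n ^ n0 * rd n ^ d)) with (c0 / rd n ^ d) in Hlow by (field; lra).
    assert (H1 : c0 / R ^ d <= c0 / rd n ^ d).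
    { unfold Rdiv. apply Rmult_le_compat_l; [lra|]. apply Rinv_le_contravar; auto. }
    rewrite !Rpow_mult_distr in Hmin.
    rewrite (Hsplit R) in Hmin.
    assert (H3 : c0 / R ^ d <= K / (2 ^ n * (R ^ n0 * R ^ d))) by (fold K in Hmin; lra).
    assert (H4 : c0 * 2 ^ n * R ^ n0 <= K).
    { apply div_le_cross in H3; [|auto| apply Rmult_lt_0_compat; [auto|nra]].
      replace (c0 * (2 ^ n * (R ^ n0 * R ^ d))) with ((c0 * 2 ^ n * R ^ n0) * R ^ d) in H3 by ring.
      apply Rmult_le_reg_r with (R ^ d); auto. }
    assert (H5 : c0 * 2 ^ n <= K).
    { assert (0 < c0 * 2 ^ n) by nra. nra. }
    assert (H6 : (1/2)^n * 2^n = 1).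
    { rewrite <- Rpow_mult_distr. replace (1/2*2) with 1 by field. apply pow1. }
    assert (H7 : c0 / (K + 1) * 2 ^ n > 1) by nra.
    assert (H8 : c0 * 2 ^ n > K + 1).
    { replace (c0 / (K + 1) * 2 ^ n) with ((c0 * 2 ^ n) / (K + 1)) in H7 by (field; lra).
      apply Rmult_gt_compat_r with (r := K + 1) in H7; [|lra].
      replace (c0 * 2 ^ n / (K + 1) * (K + 1)) with (c0 * 2 ^ n) in H7 by (field; lra). lra. }
    lra. }
  destruct Hex as [N [HN HM]]. exists N. intros k Hk.
  induction Hk as [|k Hk IH]; auto.
  assert (rd k <= rd (S k)) by (apply Hmono; lia). lra.
Qed.


Lemma csum_minus f g M : csum (fun k => Cminus (f k) (g k)) M = Cminus (csum f M) (csum g M).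
Proof. induction M; simpl; [auto|]. rewrite IHM. ring. Qed.

Definition esub (a : nat -> C) (g : C) (n : nat) (k : nat) : C :=
  Cminus (a k) (if Nat.eq_dec k n then g else RtoC 0).

Lemma esub_ACB a g n : ACB a -> ACB (esub a g n).
Proof.
  intros Ha rho Hr. destruct (Ha rho Hr) as [B HB].
  exists (B + Cmod g * rho ^ n). intros k. unfold esub.
  assert (H0 : 0 <= Cmod g * rho ^ n) by (apply Rmult_le_pos; [apply Cmod_ge_0| apply pow_le; auto]).
  assert (Hrk : 0 <= rho ^ k) by (apply pow_le; auto).
  specialize (HB k).
  assert (T := Cmod_triangle (a k) (Copp (if Nat.eq_dec k n then g else RtoC 0))).
  rewrite Cmod_opp in T.
  destruct (Nat.eq_dec k n) as [->|].
  - unfold Cminus. nra.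
  - rewrite Cmod_0 in T. unfold Cminus. nra.
Qed.

Lemma esub_pser a g n z : ACB a ->
  pser (esub a g n) z = Cminus (pser a z) (Cmult g (Cpow z n)).
Proof.
  intros Ha. symmetry. destruct (pser_approx a z Ha) as [C [HC HA]].
  apply (pser_unique _ z _ C n). apply esub_ACB; auto.
  intros N HN.
  assert (E : csum (uu (esub a g n) z) N = Cminus (csum (uu a z) N) (Cmult g (Cpow z n))).
  { rewrite <- (csum_ind (Cmult g (Cpow z n)) n N HN), <- csum_minus.
    apply csum_ext. intros k. unfold uu, esub. destruct (Nat.eq_dec k n) as [->|]; ring. }
  rewrite E. replace (Cminus (Cminus (pser a z) (Cmult g (Cpow z n))) (Cminus (csum (uu a z) N) (Cmult g (Cpow z n))))
    with (Cminus (pser a z) (csum (uu a z) N)) by ring. apply HA.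
Qed.

Definition sdiv (q : nat -> C) (z0 : C) (k : nat) : C :=
  Cdiv (Copp (csum (uu q z0) k)) (Cpow z0 (S k)).

Lemma csum_zero_upto f j : (forall k, (k <= j)%nat -> f k = RtoC 0) -> csum f j = RtoC 0.
Proof.
  induction j; intros H; simpl. apply H; lia. rewrite IHj, H by (auto; lia). ring.
Qed.

Lemma sdiv_rel q z0 k : z0 <> RtoC 0 ->
  q (S k) = Cminus (sdiv q z0 k) (Cmult z0 (sdiv q z0 (S k))).
Proof.
  intros Hz. unfold sdiv. simpl csum. unfold uu.
  assert (Cpow z0 k <> RtoC 0) by (apply Cpow_nz; auto).
  simpl Cpow. field. split; auto.
Qed.

Lemma sdiv_rel0 q z0 : z0 <> RtoC 0 -> q O = Copp (Cmult z0 (sdiv q z0 O)).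
Proof.
  intros Hz. unfold sdiv. simpl. unfold uu. simpl. field. auto.
Qed.

Lemma sdiv_identity q z0 z N : z0 <> RtoC 0 ->
  csum (uu q z) N = Cminus (Cmult (Cminus z z0) (csum (uu (sdiv q z0) z) N))
                           (Cmult (sdiv q z0 N) (Cpow z (S N))).
Proof.
  intros Hz. induction N.
  - simpl. unfold uu. rewrite (sdiv_rel0 q z0 Hz). simpl. ring.
  - change (csum (uu q z) (S N)) with (Cplus (csum (uu q z) N) (uu q z (S N))).
    change (csum (uu (sdiv q z0) z) (S N)) with (Cplus (csum (uu (sdiv q z0) z) N) (uu (sdiv q z0) z (S N))).
    rewrite IHN. unfold uu. rewrite (sdiv_rel q z0 N Hz). simpl Cpow. ring.
Qed.

Lemma sdiv_coef q z0 m : z0 <> RtoC 0 -> (forall j, (j < m)%nat -> q j = RtoC 0) ->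
  (forall j, (j < m)%nat -> sdiv q z0 j = RtoC 0) /\ sdiv q z0 m = Cdiv (q m) (Copp z0).
Proof.
  intros Hz Hq. split.
  - intros j Hj. unfold sdiv. rewrite csum_zero_upto.
    + unfold Cdiv. ring.
    + intros k Hk. unfold uu. rewrite Hq by lia. ring.
  - unfold sdiv. destruct m as [|m].
    + simpl. unfold uu. simpl. field. auto.
    + simpl csum. rewrite csum_zero_upto.
      * unfold uu. assert (Cpow z0 m <> RtoC 0) by (apply Cpow_nz; auto). simpl Cpow. field. split; auto.
      * intros k Hk. unfold uu. rewrite Hq by lia. ring.
Qed.

Lemma sdiv_bound q z0 sigma B k : Bnd q (2 * sigma) B -> 0 < sigma -> Cmod z0 <= sigma ->
  pser q z0 = RtoC 0 -> z0 <> RtoC 0 ->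
  Cmod (sdiv q z0 k) <= 4 * B / (2 * sigma) ^ (S k).
Proof.
  intros HB Hs Hz0 Hp Hnz.
  assert (Ht := tail_bound q z0 sigma B k Hs Hz0 HB).
  rewrite Hp in Ht.
  replace (Cminus (RtoC 0) (csum (uu q z0) k)) with (Copp (csum (uu q z0) k)) in Ht by ring.
  unfold sdiv. rewrite Cmod_div by (apply Cpow_nz; auto). rewrite Cmod_pow.
  assert (Htp : 0 < Cmod z0) by (apply Cmod_gt_0; auto).
  assert (Hp1 : 0 < Cmod z0 ^ S k) by (apply pow_lt; auto).
  assert (Hp2 : 0 < (2 * sigma) ^ S k) by (apply pow_lt; lra).
  unfold Rdiv in Ht. rewrite Rpow_mult_distr, pow_inv in Ht.
  apply Rmult_le_reg_r with (Cmod z0 ^ S k); auto.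
  unfold Rdiv. rewrite Rmult_assoc, Rinv_l, Rmult_1_r by lra.
  replace (4 * B * / (2 * sigma) ^ S k * Cmod z0 ^ S k) with (4 * B * (Cmod z0 ^ S k * / (2 * sigma) ^ S k)) by ring.
  exact Ht.
Qed.

Lemma sdiv_ACB q z0 : ACB q -> z0 <> RtoC 0 -> pser q z0 = RtoC 0 -> ACB (sdiv q z0).
Proof.
  intros Hq Hnz Hp rho Hr.
  set (sigma := rho + Cmod z0 + 1). assert (Hz := Cmod_ge_0 z0).
  destruct (Hq (2 * sigma)) as [B HB]; [unfold sigma; lra|].
  assert (HB0 : 0 <= B) by (specialize (HB O); simpl in HB;
     generalize (Cmod_ge_0 (q O)); lra).
  exists (4 * B). intros k.
  assert (H := sdiv_bound q z0 sigma B k HB ltac:(unfold sigma; lra) ltac:(unfold sigma; lra) Hp Hnz).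
  assert (Hp2 : 0 < (2 * sigma) ^ S k) by (apply pow_lt; unfold sigma; lra).
  assert (Hrk : rho ^ k <= (2 * sigma) ^ S k).
  { simpl. assert (rho ^ k <= (2 * sigma) ^ k) by (apply pow_incr; unfold sigma; split; lra).
    assert (1 <= (2 * sigma)) by (unfold sigma; lra).
    assert (0 <= rho ^ k) by (apply pow_le; lra). nra. }
  assert (0 <= rho ^ k) by (apply pow_le; lra).
  eapply Rle_trans. apply Rmult_le_compat_r; [auto| exact H].
  unfold Rdiv. rewrite Rmult_assoc. rewrite <- (Rmult_1_r (4 * B)) at 2.
  apply Rmult_le_compat_l; [lra|].
  apply Rmult_le_reg_l with ((2 * sigma) ^ S k); auto.
  rewrite <- Rmult_assoc, Rinv_r by lra. lra.
Qed.

Lemma sdiv_pser q z0 z : ACB q -> z0 <> RtoC 0 -> pser q z0 = RtoC 0 ->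
  pser q z = Cmult (Cminus z z0) (pser (sdiv q z0) z).
Proof.
  intros Hq Hnz Hp.
  set (sigma := Cmod z + Cmod z0 + 1). assert (Hz := Cmod_ge_0 z0). assert (Hz' := Cmod_ge_0 z).
  destruct (Hq (2 * sigma)) as [B HB]; [unfold sigma; lra|].
  assert (HB0 : 0 <= B) by (specialize (HB O); simpl in HB;
     generalize (Cmod_ge_0 (q O)); lra).
  destruct (pser_approx (sdiv q z0) z (sdiv_ACB q z0 Hq Hnz Hp)) as [C [HC HA]].
  symmetry. apply (pser_unique q z _ (Cmod (Cminus z z0) * C + 4 * B) O Hq).
  intros N _. rewrite (sdiv_identity q z0 z N Hnz).
  replace (Cminus (Cmult (Cminus z z0) (pser (sdiv q z0) z))
     (Cminus (Cmult (Cminus z z0) (csum (uu (sdiv q z0) z) N)) (Cmult (sdiv q z0 N) (Cpow z (S N)))))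
   with (Cplus (Cmult (Cminus z z0) (Cminus (pser (sdiv q z0) z) (csum (uu (sdiv q z0) z) N)))
               (Cmult (sdiv q z0 N) (Cpow z (S N)))) by ring.
  eapply Rle_trans; [apply Cmod_triangle|]. rewrite !Cmod_mult, Cmod_pow.
  assert (H1 := HA N).
  assert (H2 := sdiv_bound q z0 sigma B N HB ltac:(unfold sigma; lra) ltac:(unfold sigma; lra) Hp Hnz).
  assert (Hp2 : 0 < (2 * sigma) ^ S N) by (apply pow_lt; unfold sigma; lra).
  assert (H3 : Cmod z ^ S N / (2 * sigma) ^ S N <= (1/2)^N).
  { unfold Rdiv. rewrite <- pow_inv, <- Rpow_mult_distr. apply pow_half_le. split.
    - apply Rmult_le_pos; auto. apply Rlt_le, Rinv_0_lt_compat; unfold sigma; lra.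
    - apply Rmult_le_reg_r with (2 * sigma); [unfold sigma; lra|].
      rewrite Rmult_assoc, Rinv_l by (unfold sigma; lra). unfold sigma; lra. }
  assert (H4 : Cmod (sdiv q z0 N) * Cmod z ^ S N <= 4 * B * (1/2)^N).
  { eapply Rle_trans. apply Rmult_le_compat_r; [apply pow_le; auto| exact H2].
    unfold Rdiv. rewrite Rmult_assoc. apply Rmult_le_compat_l; [lra|].
    rewrite Rmult_comm. exact H3. }
  assert (H5 : Cmod (Cminus z z0) * Cmod (Cminus (pser (sdiv q z0) z) (csum (uu (sdiv q z0) z) N))
     <= Cmod (Cminus z z0) * (C * (1/2)^N)) by (apply Rmult_le_compat_l; auto; apply Cmod_ge_0).
  lra.
Qed.


Lemma Cmod_rev_tri (x y : C) : Cmod x - Cmod y <= Cmod (Cplus x y).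
Proof.
  assert (T := Cmod_triangle (Cplus x y) (Copp y)). rewrite Cmod_opp in T.
  replace (Cplus (Cplus x y) (Copp y)) with x in T by ring. lra.
Qed.

Lemma local_zero a n g z0 r1 r2 K Q :
  ACB a -> ACB Q -> (1 <= K)%nat ->
  0 < r1 -> r1 < Cmod z0 -> Cmod z0 < r2 -> g <> RtoC 0 ->
  (forall z, r1 <= Cmod z <= r2 -> Cmod (pser a z) <= Cmod g * Cmod z ^ n) ->
  (forall z, pser (esub a g n) z = Cmult (Cpow (Cminus z z0) K) (pser Q z)) ->
  pser Q z0 = RtoC 0.
Proof.
  intros Ha HQ HK Hr1 Hz1 Hz2 Hg Hmax HE.
  apply NNPP. intros Hb. set (b := pser Q z0) in *.
  assert (Hz0 : z0 <> RtoC 0) by (intros H; rewrite H, Cmod_0 in Hz1; lra).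
  set (D := Cdiv (Cmult (Cpow z0 n) g) b).
  assert (HD : D <> RtoC 0).
  { intros H. assert (Cpow z0 n <> RtoC 0) by (apply Cpow_nz; auto).
    assert (H2 : Cmult (Cpow z0 n) g = RtoC 0).
    { replace (Cmult (Cpow z0 n) g) with (Cmult D b) by (unfold D; field; auto). rewrite H. ring. }
    apply (Cmult_eq0_l _ _ H0) in H2. auto. }
  set (d := Cmod D). assert (Hd : 0 < d) by (apply Cmod_gt_0; auto).
  destruct (polar D) as [phi Hphi]. fold d in Hphi.
  set (u := circ 1 (phi / INR K)).
  assert (HuK : Cpow u K = circ 1 phi).
  { unfold u. rewrite demoivre. f_equal. field. apply not_0_INR. lia. }
  assert (Hu : Cmod u = 1) by (unfold u; rewrite Cmod_circ; apply Rabs_R1).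
  assert (HuKb : Cmult (Cpow u K) b = Cdiv (Cmult (Cpow z0 n) g) (RtoC d)).
  { rewrite HuK. assert (Hdc : RtoC d <> RtoC 0) by (intros H; apply RtoC_inj in H; lra).
    assert (E : circ 1 phi = Cdiv D (RtoC d)).
    { rewrite Hphi. rewrite (circ_split d phi). field. auto. }
    rewrite E. unfold D. field. split; auto. }
  set (rho := Cmod z0 + 1).
  destruct (pser_lip Q HQ rho ltac:(unfold rho; generalize (Cmod_ge_0 z0); lra)) as [L1 [HL1 Hlip]].
  set (L2 := INR n * rho ^ n).
  assert (HL2 : 0 <= L2) by (unfold L2; apply Rmult_le_pos; [apply pos_INR| apply pow_le; unfold rho; generalize (Cmod_ge_0 z0); lra]).
  set (A := Cmod g * r1 ^ n / d).
  assert (HA : 0 < A) by (unfold A; apply Rdiv_lt_0_compat; auto; apply Rmult_lt_0_compat; [apply Cmod_gt_0; auto| apply pow_lt; auto]).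
  set (Lc := Cmod g * L2 / d + L1).
  assert (HLc : 0 <= Lc) by (unfold Lc; apply Rplus_le_le_0_compat; auto; apply Rmult_le_pos;
    [apply Rmult_le_pos; auto; apply Cmod_ge_0| apply Rlt_le, Rinv_0_lt_compat; auto]).
  set (t := Rmin (Rmin 1 (Rmin (Cmod z0 - r1) (r2 - Cmod z0))) (A / (2 * (Lc + 1))) / 2).
  assert (Ht0 : 0 < t).
  { unfold t. apply Rdiv_lt_0_compat; [|lra]. apply Rmin_pos; [apply Rmin_pos; [lra| apply Rmin_pos; lra]|].
    apply Rdiv_lt_0_compat; lra. }
  assert (Htm : t <= Rmin (Rmin 1 (Rmin (Cmod z0 - r1) (r2 - Cmod z0))) (A / (2 * (Lc + 1))) / 2) by (unfold t; lra).
  assert (Hm1 := Rmin_l (Rmin 1 (Rmin (Cmod z0 - r1) (r2 - Cmod z0))) (A / (2 * (Lc + 1)))).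
  assert (Hm2 := Rmin_r (Rmin 1 (Rmin (Cmod z0 - r1) (r2 - Cmod z0))) (A / (2 * (Lc + 1)))).
  assert (Hm3 := Rmin_l 1 (Rmin (Cmod z0 - r1) (r2 - Cmod z0))).
  assert (Hm4 := Rmin_r 1 (Rmin (Cmod z0 - r1) (r2 - Cmod z0))).
  assert (Hm5 := Rmin_l (Cmod z0 - r1) (r2 - Cmod z0)).
  assert (Hm6 := Rmin_r (Cmod z0 - r1) (r2 - Cmod z0)).
  assert (Ht1 : t <= 1 / 2) by lra.
  assert (Ht2 : t < Cmod z0 - r1) by lra.
  assert (Ht3 : t < r2 - Cmod z0) by lra.
  assert (Ht4 : t * (Lc + 1) <= A / 2).
  { assert (t <= A / (2 * (Lc + 1))) by lra.
    apply Rmult_le_compat_r with (r := Lc + 1) in H; [|lra].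
    replace (A / (2 * (Lc + 1)) * (Lc + 1)) with (A / 2) in H by (field; lra). auto. }
  set (zt := Cplus z0 (Cmult (RtoC t) u)).
  assert (Hdist : Cmod (Cminus zt z0) = t).
  { unfold zt. replace (Cminus (Cplus z0 (Cmult t u)) z0) with (Cmult (RtoC t) u) by ring.
    rewrite Cmod_mult, Hu, Cmod_R, Rabs_pos_eq; lra. }
  assert (Hzt : Cmod z0 - t <= Cmod zt <= Cmod z0 + t).
  { assert (T1 := Cmod_triangle z0 (Cminus zt z0)).
    replace (Cplus z0 (Cminus zt z0)) with zt in T1 by ring.
    assert (T2 := Cmod_triangle zt (Copp (Cminus zt z0))). rewrite Cmod_opp in T2.
    replace (Cplus zt (Copp (Cminus zt z0))) with z0 in T2 by ring. lra. }
  assert (Hrange : r1 <= Cmod zt <= r2) by lra.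
  assert (Hbig := Hmax zt Hrange).
  set (e1 := Cminus (pser Q zt) b).
  set (e2 := Cminus (Cpow zt n) (Cpow z0 n)).
  assert (He1 : Cmod e1 <= L1 * t).
  { unfold e1, b. rewrite <- Hdist. apply Hlip; unfold rho; lra. }
  assert (He2 : Cmod e2 <= L2 * t).
  { unfold e2, L2. rewrite <- Hdist. apply Cpow_diff; unfold rho; try lra.
    all: generalize (Cmod_ge_0 z0); lra. }
  assert (Hdc : RtoC d <> RtoC 0) by (intros H; apply RtoC_inj in H; lra).
  assert (Hid : pser a zt = Cplus (Cmult (Cmult g (Cpow zt n)) (RtoC (1 + t ^ K / d)))
      (Cmult (RtoC (t ^ K)) (Cminus (Cmult (Cpow u K) e1) (Cdiv (Cmult g e2) (RtoC d))))).
  { assert (Hsub := esub_pser a g n zt Ha). rewrite HE in Hsub.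
    replace (Cminus zt z0) with (Cmult (RtoC t) u) in Hsub by (unfold zt; ring).
    replace (pser a zt) with (Cplus (Cmult (Cpow (Cmult t u) K) (pser Q zt)) (Cmult g (Cpow zt n)))
      by (rewrite Hsub; ring).
    rewrite Cpow_mult_l.
    replace (pser Q zt) with (Cplus b e1) by (unfold e1; ring).
    replace (Cmult (Cmult (Cpow t K) (Cpow u K)) (Cplus b e1)) with
      (Cplus (Cmult (Cpow t K) (Cmult (Cpow u K) b)) (Cmult (Cmult (Cpow t K) (Cpow u K)) e1)) by ring.
    rewrite HuKb. rewrite <- RtoC_pow.
    replace (Cpow z0 n) with (Cminus (Cpow zt n) e2) by (unfold e2; ring).
    rewrite RtoC_plus, RtoC_div. field. all: (auto || lra). }
  assert (HtK : 0 < t ^ K) by (apply pow_lt; auto).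
  assert (HtK1 : t ^ K <= t).
  { destruct K as [|K']; [lia|]. simpl. assert (t ^ K' <= 1).
    { clear -Ht0 Ht1. induction K'; simpl; [lra|]. nra. }
    nra. }
  assert (Hzn : r1 ^ n <= Cmod zt ^ n) by (apply pow_incr; lra).
  assert (Hgz : 0 <= Cmod g * Cmod zt ^ n) by (apply Rmult_le_pos; apply Cmod_ge_0 || (apply pow_le, Cmod_ge_0)).
  assert (HX : Cmod (Cmult (Cmult g (Cpow zt n)) (RtoC (1 + t ^ K / d))) = Cmod g * Cmod zt ^ n * (1 + t ^ K / d)).
  { rewrite !Cmod_mult, Cmod_pow, Cmod_R, Rabs_pos_eq. auto.
    assert (0 <= t ^ K / d) by (apply Rdiv_le_0_compat; lra). lra. }
  assert (HY : Cmod (Cmult (RtoC (t ^ K)) (Cminus (Cmult (Cpow u K) e1) (Cdiv (Cmult g e2) (RtoC d))))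
     <= t ^ K * (L1 * t + Cmod g * (L2 * t) / d)).
  { rewrite Cmod_mult, Cmod_R, Rabs_pos_eq by lra. apply Rmult_le_compat_l; [lra|].
    unfold Cminus. eapply Rle_trans; [apply Cmod_triangle|]. rewrite Cmod_opp, Cmod_mult, Cmod_pow, Hu, pow1.
    rewrite Cmod_div, Cmod_mult, Cmod_R, Rabs_pos_eq by (auto || lra).
    apply Rplus_le_compat. lra. unfold Rdiv. apply Rmult_le_compat_r. apply Rlt_le, Rinv_0_lt_compat; auto.
    apply Rmult_le_compat_l; auto. apply Cmod_ge_0. }
  assert (Hlow := Cmod_rev_tri (Cmult (Cmult g (Cpow zt n)) (RtoC (1 + t ^ K / d)))
    (Cmult (RtoC (t ^ K)) (Cminus (Cmult (Cpow u K) e1) (Cdiv (Cmult g e2) (RtoC d))))).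
  rewrite <- Hid, HX in Hlow.
  assert (Hkey : t * (L1 + Cmod g * L2 / d) < Cmod g * Cmod zt ^ n / d).
  { assert (A <= Cmod g * Cmod zt ^ n / d).
    { unfold A, Rdiv. apply Rmult_le_compat_r. apply Rlt_le, Rinv_0_lt_compat; auto.
      apply Rmult_le_compat_l; auto. apply Cmod_ge_0. }
    assert (t * Lc <= A / 2) by nra.
    unfold Lc in *. replace (t * (L1 + Cmod g * L2 / d)) with (t * (Cmod g * L2 / d + L1)) by ring. lra. }
  assert (Hfin : t ^ K * (L1 * t + Cmod g * (L2 * t) / d) < t ^ K * (Cmod g * Cmod zt ^ n / d)).
  { apply Rmult_lt_compat_l; auto.
    replace (L1 * t + Cmod g * (L2 * t) / d) with (t * (L1 + Cmod g * L2 / d)) by (field; lra). auto. }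
  replace (Cmod g * Cmod zt ^ n * (1 + t ^ K / d)) with
    (Cmod g * Cmod zt ^ n + t ^ K * (Cmod g * Cmod zt ^ n / d)) in Hlow by (field; lra).
  lra.
Qed.


Lemma exists_min (P : nat -> Prop) k : P k -> exists m, P m /\ forall j, (j < m)%nat -> ~ P j.
Proof.
  induction k as [k IH] using lt_wf_ind. intros Hk.
  destruct (classic (exists j, (j < k)%nat /\ P j)) as [[j [Hj1 Hj2]]|Hno].
  - apply (IH j Hj1 Hj2).
  - exists k. split; auto. intros j Hj Pj. apply Hno. exists j. auto.
Qed.

Lemma iterate a n g z0 r1 r2 m : ACB a -> 0 < r1 -> r1 < Cmod z0 -> Cmod z0 < r2 -> g <> RtoC 0 ->
  (forall z, r1 <= Cmod z <= r2 -> Cmod (pser a z) <= Cmod g * Cmod z ^ n) ->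
  pser (esub a g n) z0 = RtoC 0 ->
  (forall j, (j < m)%nat -> esub a g n j = RtoC 0) ->
  forall K, exists Q, ACB Q /\
    (forall z, pser (esub a g n) z = Cmult (Cpow (Cminus z z0) K) (pser Q z)) /\
    (forall j, (j < m)%nat -> Q j = RtoC 0) /\
    Q m = Cdiv (esub a g n m) (Cpow (Copp z0) K).
Proof.
  intros Ha Hr1 Hz1 Hz2 Hg Hmax HE0 Hlow.
  assert (Hz0 : z0 <> RtoC 0) by (intros H; rewrite H, Cmod_0 in Hz1; lra).
  assert (HE : ACB (esub a g n)) by (apply esub_ACB; auto).
  induction K as [|K IH].
  - exists (esub a g n). refine (conj HE (conj _ (conj Hlow _))).
    + intros z. simpl. ring.
    + simpl. unfold Cdiv. replace (Cinv 1) with (RtoC 1). ring.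
      unfold Cinv, RtoC; simpl. f_equal; field.
  - destruct IH as [Q [HQ [Hid [Hl Hm]]]].
    assert (HQ0 : pser Q z0 = RtoC 0).
    { destruct K as [|K'].
      - rewrite <- HE0, Hid. simpl. ring.
      - apply (local_zero a n g z0 r1 r2 (S K') Q); auto. lia. }
    destruct (sdiv_coef Q z0 m Hz0 Hl) as [Hl' Hm'].
    exists (sdiv Q z0). split; [apply sdiv_ACB; auto|]. split.
    + intros z. rewrite Hid, (sdiv_pser Q z0 z) by auto. simpl Cpow. ring.
    + split; auto. rewrite Hm', Hm. simpl Cpow.
      assert (Copp z0 <> RtoC 0) by (intros H; apply Hz0; replace z0 with (Copp (Copp z0)) by ring; rewrite H; ring).
      assert (Cpow (Copp z0) K <> RtoC 0) by (apply Cpow_nz; auto).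
      field. split; auto.
Qed.

Lemma no_two_min a n0 n r1 r2 : entire_coeffs a -> transcendental_coeffs a -> first_nonzero a n0 ->
  (n0 < n)%nat -> r1 < r2 -> is_rdiamond a n r1 -> is_rdiamond a n r2 -> False.
Proof.
  intros Hent Ht [Hn0 _] Hn Hr12 [Hr1 Hm1] [Hr2 Hm2].
  assert (Ha := entire_ACB a Hent).
  fold (gg a n r1) in Hm1. fold (gg a n r2) in Hm2.
  assert (Hm1' : forall s, 0 < s -> gg a n r1 <= gg a n s) by exact Hm1.
  assert (Hm2' : forall s, 0 < s -> gg a n r2 <= gg a n s) by exact Hm2.
  clear Hm1 Hm2.
  assert (Hc : gg a n r1 = gg a n r2) by (apply Rle_antisym; [apply Hm1'| apply Hm2']; lra).
  destruct (continuity_ab_maj (gg a n) r1 r2) as [Mx [HMx1 HMx2]]; [lra| |].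
  { intros c Hc'. apply gg_cont; auto; lra. }
  assert (Hr0 : exists r0, r1 < r0 < r2 /\ forall rho, r1 <= rho <= r2 -> gg a n rho <= gg a n r0).
  { destruct (Rlt_dec r1 Mx); [destruct (Rlt_dec Mx r2)|].
    - exists Mx. split; [lra|]. auto.
    - exists ((r1 + r2) / 2). split; [lra|]. intros rho Hrho.
      assert (Mx = r2) by lra. subst Mx.
      assert (gg a n r1 <= gg a n ((r1 + r2) / 2)) by (apply Hm1'; lra).
      specialize (HMx1 rho Hrho). lra.
    - exists ((r1 + r2) / 2). split; [lra|]. intros rho Hrho.
      assert (Mx = r1) by lra. subst Mx.
      assert (gg a n r1 <= gg a n ((r1 + r2) / 2)) by (apply Hm1'; lra).
      specialize (HMx1 rho Hrho). lra. }
  destruct Hr0 as [r0 [Hr0 Hr0max]].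
  destruct (maxmod_attained a r0 Ha ltac:(lra)) as [t0 Ht0].
  set (z0 := circ r0 t0).
  assert (Hz0m : Cmod z0 = r0) by (unfold z0; rewrite Cmod_circ, Rabs_pos_eq; lra).
  assert (Hz0 : z0 <> RtoC 0) by (intros H; rewrite H, Cmod_0 in Hz0m; lra).
  assert (Hz0n : Cpow z0 n <> RtoC 0) by (apply Cpow_nz; auto).
  set (g := Cdiv (pser a z0) (Cpow z0 n)).
  assert (Hgm : Cmod g = gg a n r0).
  { unfold g, gg. rewrite Cmod_div, Cmod_pow, Hz0m by auto. fold z0 in Ht0. rewrite Ht0. auto. }
  assert (Hmpos : 0 < maxmod a r0) by (apply (maxmod_pos a r0 n0); auto; lra).
  assert (Hg : g <> RtoC 0).
  { intros H. rewrite H, Cmod_0 in Hgm. unfold gg in Hgm.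
    assert (0 < maxmod a r0 / r0 ^ n) by (apply Rdiv_lt_0_compat; auto; apply pow_lt; lra). lra. }
  assert (Hmax : forall z, r1 <= Cmod z <= r2 -> Cmod (pser a z) <= Cmod g * Cmod z ^ n).
  { intros z Hz. destruct (polar z) as [phi Hphi].
    assert (Hzp : 0 < Cmod z) by lra.
    rewrite Hphi at 1. eapply Rle_trans. apply maxmod_ub; auto.
    assert (H := Hr0max (Cmod z) Hz). unfold gg in H. rewrite Hgm. unfold gg.
    assert (Hzn : 0 < Cmod z ^ n) by (apply pow_lt; auto).
    apply Rmult_le_compat_r with (r := Cmod z ^ n) in H; [|lra].
    unfold Rdiv at 1 in H. rewrite Rmult_assoc, Rinv_l, Rmult_1_r in H by lra. auto. }
  set (E := esub a g n).
  assert (HE0 : pser E z0 = RtoC 0).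
  { unfold E. rewrite esub_pser by auto. unfold g. field. auto. }
  destruct (exists_big_coef a n Ht) as [k [Hk1 Hk2]].
  assert (HEk : E k <> RtoC 0).
  { unfold E, esub. destruct (Nat.eq_dec k n); [lia|]. replace (Cminus (a k) 0) with (a k) by ring. auto. }
  destruct (exists_min (fun j => E j <> RtoC 0) k HEk) as [m [Hm Hmmin]].
  assert (Hlow : forall j, (j < m)%nat -> E j = RtoC 0).
  { intros j Hj. apply NNPP. apply Hmmin; auto. }
  assert (HEA : ACB E) by (apply esub_ACB; auto).
  set (R := 3 * r0).
  destruct (pser_bound E HEA R ltac:(unfold R; lra)) as [Be HBe].
  set (cm := Cmod (E m)). assert (Hcm : 0 < cm) by (apply Cmod_gt_0; auto).
  assert (HRm : 0 < R ^ m) by (apply pow_lt; unfold R; lra).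
  assert (Hall : forall K, cm * R ^ m * 2 ^ K <= Be).
  { intros K.
    destruct (iterate a n g z0 r1 r2 m Ha ltac:(lra) ltac:(lra) ltac:(lra) Hg Hmax HE0 Hlow K)
      as [Q [HQ [Hid [_ HQm]]]].
    assert (Hbnd : forall t, Cmod (pser Q (circ R t)) <= Be / (2 * r0) ^ K).
    { intros t. assert (H := HBe (circ R t)). rewrite Cmod_circ, Rabs_pos_eq in H by (unfold R; lra).
      specialize (H (Rle_refl _)). fold E in Hid. rewrite Hid, Cmod_mult, Cmod_pow in H.
      assert (Hd : 2 * r0 <= Cmod (Cminus (circ R t) z0)).
      { assert (T := Cmod_triangle (Cminus (circ R t) z0) z0).
        replace (Cplus (Cminus (circ R t) z0) z0) with (circ R t) in T by ring.
        rewrite Cmod_circ, Rabs_pos_eq in T by (unfold R; lra). unfold R in *. lra. }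
      assert (Hdk : (2 * r0) ^ K <= Cmod (Cminus (circ R t) z0) ^ K) by (apply pow_incr; lra).
      assert (Hp : 0 < (2 * r0) ^ K) by (apply pow_lt; lra).
      apply Rmult_le_reg_l with ((2 * r0) ^ K); auto.
      unfold Rdiv. rewrite (Rmult_comm Be), <- Rmult_assoc, Rinv_r, Rmult_1_l by lra.
      eapply Rle_trans; [|exact H]. apply Rmult_le_compat_r; auto. apply Cmod_ge_0. }
    assert (Hcy := cauchy Q R _ m HQ ltac:(unfold R; lra) Hbnd).
    rewrite HQm, Cmod_div, Cmod_pow, Cmod_opp, Hz0m in Hcy.
    2: { apply Cpow_nz. intros H. apply Hz0. replace z0 with (Copp (Copp z0)) by ring. rewrite H. ring. }
    change (Cmod (esub a g n m)) with cm in Hcy.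
    assert (Hp1 : 0 < r0 ^ K) by (apply pow_lt; lra).
    assert (Hp2 : 0 < (2 * r0) ^ K) by (apply pow_lt; lra).
    rewrite Rpow_mult_distr in Hcy, Hp2.
    assert (H2K : 0 < 2 ^ K) by (apply pow_lt; lra).
    apply Rmult_le_compat_r with (r := 2 ^ K * r0 ^ K) in Hcy; [|nra].
    replace (cm / r0 ^ K * R ^ m * (2 ^ K * r0 ^ K)) with (cm * R ^ m * 2 ^ K) in Hcy by (field; lra).
    replace (Be / (2 ^ K * r0 ^ K) * (2 ^ K * r0 ^ K)) with Be in Hcy by (field; lra). auto. }
  assert (HBe0 : 0 < Be) by (assert (H := Hall O); simpl in H; nra).
  destruct (pow_lt_1_zero (1/2) ltac:(rewrite Rabs_pos_eq; lra) (cm * R ^ m / (Be + 1))) as [N0 HN0].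
  { apply Rdiv_lt_0_compat; nra. }
  specialize (HN0 N0 (le_n _)). rewrite Rabs_pos_eq in HN0 by (apply pow_le; lra).
  specialize (Hall N0).
  assert (H6 : (1/2)^N0 * 2^N0 = 1).
  { rewrite <- Rpow_mult_distr. replace (1/2*2) with 1 by field. apply pow1. }
  assert (H2 : 0 < 2 ^ N0) by (apply pow_lt; lra).
  assert (H7 : cm * R ^ m / (Be + 1) * 2 ^ N0 > 1) by nra.
  replace (cm * R ^ m / (Be + 1) * 2 ^ N0) with (cm * R ^ m * 2 ^ N0 / (Be + 1)) in H7 by (field; lra).
  apply Rmult_gt_compat_r with (r := Be + 1) in H7; [|lra].
  replace (cm * R ^ m * 2 ^ N0 / (Be + 1) * (Be + 1)) with (cm * R ^ m * 2 ^ N0) in H7 by (field; lra).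
  lra.
Qed.


Theorem theorem7p3 (a : nat -> C) (n0 : nat) :
  entire_coeffs a ->
  transcendental_coeffs a ->
  first_nonzero a n0 ->
  (forall n : nat, (n0 < n)%nat -> exists! r : R, is_rdiamond a n r) /\
  (forall rd : nat -> R,
     (forall n : nat, (n0 < n)%nat -> is_rdiamond a n (rd n)) ->
     (forall n : nat, (n0 < n)%nat -> rd n <= rd (S n)) /\
     is_lim_seq rd p_infty).
Proof.
  intros Hent Ht Hf.
  assert (Ha := entire_ACB a Hent).
  destruct Hf as [Hn0 Hlow].
  split.
  - intros n Hn. destruct (rd_exists a n0 n Hent Ht (conj Hn0 Hlow) Hn) as [r Hr].
    exists r. split; auto. intros r' Hr'.
    destruct (Rtotal_order r r') as [Hlt|[Heq|Hgt]]; auto.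
    + exfalso. apply (no_two_min a n0 n r r' Hent Ht (conj Hn0 Hlow) Hn Hlt Hr Hr').
    + exfalso. apply (no_two_min a n0 n r' r Hent Ht (conj Hn0 Hlow) Hn Hgt Hr' Hr).
  - intros rd Hrd. split.
    + intros n Hn. apply (rd_mono a n0 n); auto.
    + apply (rd_lim a n0 rd); auto.
Qed.
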